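(* Let $K_h, M_h, W_h, D_h\in\mathbb{R}^{N_h\times N_h}$, $y_d,f\in\mathbb{R}^{N_h}$, $\alpha>0$, $\delta>0$, $a,b\in\mathbb{R}$, $c_n$ and $\sigma$ be as described in the context, and let $$F(p,\lambda,\mu)=\tfrac12\|K_h^Tp+\lambda-M_hy_d\|_{M_h^{-1}}^2+\tfrac{1}{2\alpha}\|M_hp-\mu\|_{M_h^{-1}}^2+\delta^*_{\mathcal{C}}(\lambda)+\delta^*_{\mathcal{S}}(\mu)+(M_hf,p)-\tfrac12\|y_d\|_{M_h}^2$$ for $p,\lambda,\mu\in\mathbb{R}^{N_h}$, with $\phi(p,\lambda,\mu)=\tfrac12\|K_h^Tp+\lambda-M_hy_d\|_{M_h^{-1}}^2+\tfrac{1}{2\alpha}\|M_hp-\mu\|_{M_h^{-1}}^2-\tfrac12\|y_d\|_{M_h}^2$. Consider the following algorithm (FE-dABCD). Input: $(p^1,\lambda^1,\mu^1)=(\tilde p^0,\tilde\lambda^0,\tilde\mu^0)\in\mathbb{R}^{N_h}\times\mathrm{dom}(\delta^*_{\mathcal{C}})\times\mathrm{dom}(\delta^*_{\mathcal{S}})$, a sequence of nonnegative numbers $\{\epsilon_k\}$ with $\sum_{k=1}^\infty k\epsilon_k<\infty$, $t_1=1$. For $k=1,2,\dots$: Step 1: choose error vectors $\delta_p^k,\delta_\lambda^k,\delta_\mu^k\in\mathbb{R}^{N_h}$ with $\max\{\|\delta_p^k\|,\|\delta_\lambda^k\|,\|\delta_\mu^k\|\}\le\epsilon_k$, and compute \begin{align*}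 \tilde p^k&=\arg\min_p\big\{(M_hf,p)+\phi(p,\lambda^k,\mu^k)-\langle\delta_p^k,p\rangle\big\},\\ \tilde\lambda^k&=\arg\min_\lambda\big\{\delta^*_{\mathcal{C}}(\lambda)+\tfrac12\|\lambda-M_hy_d+K_h^T\tilde p^k\|_{M_h^{-1}}^2+\tfrac12\|\lambda-\lambda^k\|_{\sigma I-M_h^{-1}}^2-\langle\delta_\lambda^k,\lambda\rangle\big\},\\ \tilde\mu^k&=\arg\min_\mu\big\{\delta^*_{\mathcal{S}}(\mu)+\tfrac{1}{2\alpha}\|\mu-M_h\tilde p^k\|_{M_h^{-1}}^2+\tfrac{1}{2\alpha}\|\mu-\mu^k\|_{c_nW_h^{-1}-M_h^{-1}}^2-\langle\delta_\mu^k,\mu\rangle\big\}; \end{align*} Step 2: set $t_{k+1}=\frac{1+\sqrt{1+4t_k^2}}{2}$, $\beta_k=\frac{t_k-1}{t_{k+1}}$, and $p^{k+1}=\tilde p^k+\beta_k(\tilde p^k-\tilde p^{k-1})$, $\lambda^{k+1}=\tilde\lambda^k+\beta_k(\tilde\lambda^k-\tilde\lambda^{k-1})$, $\mu^{k+1}=\tilde\mu^k+\beta_k(\tilde\mu^k-\tilde\mu^{k-1})$. Let $\tilde z^k=(\tilde p^k,\tilde\lambda^k,\tilde\mu^k)$ be the generated sequence and let $z^*$ be a minimizer of $F$. Then there is a constant $c_0$ such that $$F(\tilde z^k)-F(z^* )\le\frac{2\|\tilde z^0-z^*\|_{\mathscr{S}}^2+c_0}{(k+1)^2}\qquad\forall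 k\ge1,$$ where $\mathscr{S}=\mathrm{Diag}(\mathcal{D}_1,\mathcal{D}_2+\mathcal{Q}_{22})$ with $\mathcal{D}_1=0$, $\mathcal{D}_2=\mathrm{Diag}\big(\sigma I-M_h^{-1},\ \tfrac1\alpha(c_nW_h^{-1}-M_h^{-1})\big)$, $\mathcal{Q}_{22}=\mathrm{Diag}\big(M_h^{-1},\tfrac1\alpha M_h^{-1}\big)$.
   Context: Setting: $\Omega\subset\mathbb{R}^n$ ($n=2,3$) is an open bounded convex polygonal/polyhedral domain (or approximated by $\Omega_h$), with a regular, quasi-uniform family of triangulations; $\phi_1,\dots,\phi_{N_h}$ are the nodal basis functions of continuous piecewise linear finite elements vanishing on the boundary. $K_h=(a(\phi_i,\phi_j))_{i,j}$ is the stiffness matrix of the bilinear form $a(y,v)=\int_\Omega(\sum_{i,j}a_{ij}y_{x_i}v_{x_j}+c_0yv)dx$ of a uniformly elliptic operator (symmetric positive definite), $M_h=(\int_{\Omega_h}\phi_i\phi_j dx)_{i,j}$ is the mass matrix, $W_h=\mathrm{diag}(\int_{\Omega_h}\phi_i dx)_{i}$ is the lumped mass matrix, and $D_h=\sum_{j=1}^n\big(\int_{\Omega_h}\partial_{x_j}\phi_i\,\partial_{x_j}\phi_l\,dx\big)_{i,l}$. $y_d,f\in\mathbb{R}^{N_h}$ are nodal values of given data. $\mathcal{C}=\{z\in\mathbb{R}^{N_h}: z^TD_hz\le\delta\}$, $\mathcal{S}=\{z\in\mathbb{R}^{N_h}: a\le z\le b \text{ componentwise}\}$. For a closed convex set $B$,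 $\delta^*_B(y)=\sup_{x\in B}(y,x)$ is its support function (the conjugate of the indicator function of $B$). $\|x\|_G^2=x^TGx$ and $(\cdot,\cdot)$, $\langle\cdot,\cdot\rangle$ denote the Euclidean inner product. $c_n=4$ if $n=2$ and $c_n=5$ if $n=3$ (so that $\|z\|_{M_h}^2\le\|z\|_{W_h}^2\le c_n\|z\|_{M_h}^2$), and $\sigma=c_n\omega_m$ where $\omega_m$ is the inverse of the smallest diagonal entry of $W_h$, so that $\sigma I-M_h^{-1}\succeq0$ and $c_nW_h^{-1}-M_h^{-1}\succeq0$. *)

(* Defs.v *)
From HB Require Import structures.
From mathcomp Require Import all_boot all_order all_algebra.
From mathcomp Require Import all_classical all_reals all_analysis.
Set Implicit Arguments. Unset Strict Implicit. Unset Printing Implicit Defensive.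
Import Order.TTheory GRing.Theory Num.Theory.
Local Open Scope ring_scope.

Section FE.
Variable R : realType.
Variable N : nat.
Notation vec := 'cV[R]_N.
Notation mat := 'M[R]_N.

Definition dot (x y : vec) : R := (x^T *m y) 0 0.
Definition qf (G : mat) (x : vec) : R := (x^T *m G *m x) 0 0.
Definition enorm (x : vec) : R := Num.sqrt (dot x x).

Definition ellC (D : mat) (del : R) : set vec := [set z | qf D z <= del].
Definition boxS (a b : R) : set vec := [set z | forall i, a <= z i 0 <= b].

Definition supp (B : set vec) (y : vec) : \bar R :=
  ereal_sup [set (dot y x)%:E | x in B].
Definition supp_dom (B : set vec) : set vec := [set y | (supp B y < +oo)%E].

Definition symmx (A : mat) : Prop := A^T = A.
Definition posdef (A : mat) : Prop := forall x : vec, x != 0 -> 0 < qf A x.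
Definition possemidef (A : mat) : Prop := forall x : vec, 0 <= qf A x.

Definition phi (K M : mat) (yd : vec) (alpha : R) (p l m : vec) : R :=
  1/2 * qf (invmx M) (K^T *m p + l - M *m yd)
  + 1/(2 * alpha) * qf (invmx M) (M *m p - m)
  - 1/2 * qf M yd.

Definition Fobj (K M D : mat) (yd f : vec) (alpha del a b : R) (p l m : vec)
  : \bar R :=
  ((phi K M yd alpha p l m + dot (M *m f) p)%:E
   + supp (ellC D del) l + supp (boxS a b) m)%E.

End FE.

(* t_k = tacc (k-1):  t_1 = 1,  t_{k+1} = (1 + sqrt(1 + 4 t_k^2)) / 2 *)
Fixpoint tacc {R : realType} (j : nat) : R :=
  match j with
  | 0%N => 1
  | j'.+1 => (1 + Num.sqrt (1 + 4 * (tacc j') ^+ 2)) / 2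
  end.
Definition tk {R : realType} (k : nat) : R := tacc k.-1.
Definition betak {R : realType} (k : nat) : R := (tk k - 1) / tk k.+1.

(* Main.v *)
Require Import Defs.
From HB Require Import structures.
From mathcomp Require Import all_boot all_order all_algebra.
From mathcomp Require Import all_classical all_reals all_analysis.
From mathcomp Require Import ring lra.
Import Order.TTheory GRing.Theory Num.Theory numFieldNormedType.Exports.
Local Open Scope classical_set_scope.
Local Open Scope ring_scope.


Section Basic.
Variable R : realType.
Variable N : nat.
Implicit Types (x y z : 'cV[R]_N) (A G : 'M[R]_N).

Lemma dotE x y : dot x y = \sum_i x i 0 * y i 0.
Proof. by rewrite /dot !mxE; apply: eq_bigr => i _; rewrite !mxE. Qed.

Lemma dotC x y : dot x y = dot y x.
Proof. by rewrite !dotE; apply: eq_bigr => i _; rewrite mulrC. Qed.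

Lemma dotDl x y z : dot (x + y) z = dot x z + dot y z.
Proof. by rewrite !dotE -big_split; apply: eq_bigr => i _; rewrite !mxE mulrDl. Qed.

Lemma dotZl (a : R) x y : dot (a *: x) y = a * dot x y.
Proof. by rewrite !dotE mulr_sumr; apply: eq_bigr => i _; rewrite !mxE mulrA. Qed.

Lemma dotNl x y : dot (- x) y = - dot x y.
Proof. by rewrite -scaleN1r dotZl mulN1r. Qed.

Lemma dotBl x y z : dot (x - y) z = dot x z - dot y z.
Proof. by rewrite dotDl dotNl. Qed.

Lemma dotDr x y z : dot z (x + y) = dot z x + dot z y.
Proof. by rewrite dotC dotDl !(dotC z). Qed.

Lemma dotZr (a : R) x y : dot y (a *: x) = a * dot y x.
Proof. by rewrite dotC dotZl dotC. Qed.

Lemma dotNr x y : dot y (- x) = - dot y x.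
Proof. by rewrite dotC dotNl dotC. Qed.

Lemma dotBr x y z : dot z (x - y) = dot z x - dot z y.
Proof. by rewrite dotDr dotNr. Qed.

Lemma dot0l x : dot 0 x = 0.
Proof. by rewrite -(scale0r 0) dotZl mul0r. Qed.
Lemma dot0r x : dot x 0 = 0.
Proof. by rewrite dotC dot0l. Qed.

Lemma dot_mull x A y : dot x (A *m y) = dot (A^T *m x) y.
Proof. by rewrite /dot trmx_mul trmxK mulmxA. Qed.

Lemma qfE G x : qf G x = dot x (G *m x).
Proof. by rewrite /qf /dot mulmxA. Qed.

Lemma dot_sym A x y : symmx A -> dot x (A *m y) = dot y (A *m x).
Proof. by move=> sA; rewrite dot_mull sA dotC. Qed.

Lemma qf_addm G1 G2 x : qf (G1 + G2) x = qf G1 x + qf G2 x.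
Proof. by rewrite !qfE mulmxDl dotDr. Qed.

Lemma qf_subm G1 G2 x : qf (G1 - G2) x = qf G1 x - qf G2 x.
Proof. by rewrite !qfE mulmxBl dotBr. Qed.

Lemma qf_scalem (c : R) G x : qf (c *: G) x = c * qf G x.
Proof. by rewrite !qfE -scalemxAl dotZr. Qed.

Lemma qf_scalar (c : R) x : qf c%:M x = c * dot x x.
Proof. by rewrite qfE mul_scalar_mx dotZr. Qed.

Lemma qf0m x : qf 0 x = 0.
Proof. by rewrite qfE mul0mx dot0r. Qed.

Lemma qfD G x y : symmx G -> qf G (x + y) = qf G x + 2 * dot x (G *m y) + qf G y.
Proof.
move=> sG; rewrite !qfE mulmxDr !dotDl !dotDr (dot_sym G y x sG); ring.
Qed.

Lemma qfZ G (a : R) x : qf G (a *: x) = a ^+ 2 * qf G x.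
Proof. by rewrite !qfE -scalemxAr dotZl dotZr mulrA expr2. Qed.

Lemma qfN G x : qf G (- x) = qf G x.
Proof. by rewrite -scaleN1r qfZ sqrrN expr1n mul1r. Qed.

Lemma dot_ge0 x : 0 <= dot x x.
Proof. by rewrite dotE; apply: sumr_ge0 => i _; rewrite -expr2 sqr_ge0. Qed.

Lemma enorm_ge0 x : 0 <= enorm x.
Proof. exact: sqrtr_ge0. Qed.

Lemma enorm_sq x : enorm x ^+ 2 = dot x x.
Proof. by rewrite /enorm sqr_sqrtr // dot_ge0. Qed.

Lemma coord_le x i : `|x i 0| <= enorm x.
Proof.
rewrite /enorm -sqrtr_sqr; apply: ler_wsqrtr.
rewrite dotE (bigD1 i) //= -expr2 lerDl; apply: sumr_ge0 => j _.
by rewrite -expr2 sqr_ge0.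
Qed.

Definition mxabs A : R := \sum_i \sum_j `|A i j|.

Lemma mxabs_ge0 A : 0 <= mxabs A.
Proof. by apply: sumr_ge0 => i _; apply: sumr_ge0 => j _. Qed.

Lemma dot_bound x A y : `|dot x (A *m y)| <= mxabs A * enorm x * enorm y.
Proof.
rewrite dotE /mxabs mulr_suml mulr_suml.
apply: le_trans (ler_norm_sum _ _ _) _; apply: ler_sum => i _.
rewrite !mxE normrM.
have h4 := normr_ge0 (x i 0).
have hs : `|\sum_j A i j * y j 0| <= (\sum_j `|A i j|) * enorm y.
  rewrite mulr_suml; apply: le_trans (ler_norm_sum _ _ _) _; apply: ler_sum => j _.
  by rewrite normrM; apply: ler_wpM2l => //; apply: coord_le.
have hs0 : 0 <= (\sum_j `|A i j|) by apply: sumr_ge0.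
apply: le_trans (ler_wpM2l h4 hs) _.
rewrite [X in _ <= X](_ : _ = enorm x * ((\sum_j `|A i j|) * enorm y)); last by ring.
apply: ler_wpM2r; first by rewrite mulr_ge0 // enorm_ge0.
exact: coord_le.
Qed.

Lemma dot_bound1 x y : `|dot x y| <= N%:R * enorm x * enorm y.
Proof.
have -> : dot x y = dot x (1%:M *m y) by rewrite mul1mx.
have -> : (N%:R : R) = mxabs 1%:M.
  rewrite /mxabs.
  transitivity (\sum_(i < N) (1 : R)); first by rewrite sumr_const card_ord.
  apply: eq_bigr => i _; rewrite (bigD1 i) //= big1 ?addr0; first by rewrite mxE eqxx normr1.
  by move=> j /negPf ji; rewrite mxE eq_sym ji normr0.
exact: dot_bound.
Qed.

End Basic.
Arguments dotE {R N}.
Arguments dotC {R N}.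
Arguments dotDl {R N}.
Arguments dotZl {R N}.
Arguments dotNl {R N}.
Arguments dotBl {R N}.
Arguments dotDr {R N}.
Arguments dotZr {R N}.
Arguments dotNr {R N}.
Arguments dotBr {R N}.
Arguments dot0l {R N}.
Arguments dot0r {R N}.
Arguments dot_mull {R N}.
Arguments qfE {R N}.
Arguments dot_sym {R N}.
Arguments qf_addm {R N}.
Arguments qf_subm {R N}.
Arguments qf_scalem {R N}.
Arguments qf_scalar {R N}.
Arguments qf0m {R N}.
Arguments qfD {R N}.
Arguments qfZ {R N}.
Arguments qfN {R N}.
Arguments dot_ge0 {R N}.
Arguments enorm_ge0 {R N}.
Arguments enorm_sq {R N}.
Arguments coord_le {R N}.
Arguments mxabs {R N}.
Arguments mxabs_ge0 {R N}.
Arguments dot_bound {R N}.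
Arguments dot_bound1 {R N}.


Section Mat.
Variable R : realType.
Variable N : nat.
Implicit Types (x y z : 'cV[R]_N) (A G : 'M[R]_N).

Lemma qf_eq0 A x : posdef A -> qf A x = 0 -> x = 0.
Proof.
move=> pA h; apply/eqP; apply/negP => /negP nz.
by have := pA x nz; rewrite h ltxx.
Qed.

Lemma posdef_psd A : posdef A -> possemidef A.
Proof.
move=> pA x; case: (eqVneq x 0) => [->|nz]; last exact/ltW/pA.
by rewrite qfE mulmx0 dot0r.
Qed.

Lemma posdef_unit A : symmx A -> posdef A -> A \in unitmx.
Proof.
move=> sA pA; rewrite -row_free_unit -kermx_eq0; apply/eqP.
apply/row_matrixP => i; rewrite row0.
set v := (row i (kermx A))^T.
have hA : A *m v = 0.
  have h0 : row i (kermx A) *m A = 0 by rewrite -row_mul mulmx_ker row0.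
  by rewrite /v -{1}sA -trmx_mul h0 trmx0.
have : v = 0 by apply: (qf_eq0 A v pA); rewrite qfE hA dot0r.
by move/(congr1 trmx); rewrite /v trmxK trmx0.
Qed.

Lemma inv_sym A : symmx A -> symmx (invmx A).
Proof. by move=> sA; rewrite /symmx trmx_inv sA. Qed.

Lemma invK_l A x : A \in unitmx -> A *m (invmx A *m x) = x.
Proof. by move=> uA; rewrite mulmxA mulmxV // mul1mx. Qed.

Lemma invK_r A x : A \in unitmx -> invmx A *m (A *m x) = x.
Proof. by move=> uA; rewrite mulmxA mulVmx // mul1mx. Qed.

Lemma qf_inv A x : symmx A -> A \in unitmx ->
  qf (invmx A) x = qf A (invmx A *m x).
Proof.
by move=> sA uA; rewrite !qfE invK_l //; apply: dotC.
Qed.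

Lemma inv_psd A : symmx A -> A \in unitmx -> possemidef A -> possemidef (invmx A).
Proof. by move=> sA uA pA x; rewrite qf_inv //. Qed.

Lemma inv_mono G1 G2 : symmx G1 -> symmx G2 -> G1 \in unitmx -> G2 \in unitmx ->
  possemidef G1 -> (forall x, qf G1 x <= qf G2 x) ->
  forall x, qf (invmx G2) x <= qf (invmx G1) x.
Proof.
move=> s1 s2 u1 u2 p1 le12 x.
set y := invmx G2 *m x; set z := invmx G1 *m x.
have e1 : qf (invmx G2) x = qf G2 y by rewrite qf_inv.
have e2 : qf (invmx G1) x = qf G1 z by rewrite qf_inv.
have hx : G2 *m y = x by rewrite /y invK_l.
have hz : G1 *m z = x by rewrite /z invK_l.
have h0 := p1 (y - z).
rewrite qfD // qfN mulmxN hz dotNr in h0.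
have h1 : qf G2 y = dot y x by rewrite qfE hx.
have h2 : qf G1 z = dot z x by rewrite qfE hz.
have h4 := le12 y.
rewrite e1 e2; lra.
Qed.

Lemma qf_diag (v : 'rV[R]_N) x : qf (diag_mx v) x = \sum_i v 0 i * x i 0 ^+ 2.
Proof.
by rewrite qfE dotE; apply: eq_bigr => i _; rewrite mul_diag_mx mxE mulrCA expr2.
Qed.

Lemma inv_diag (v : 'rV[R]_N) : (forall i, v 0 i != 0) ->
  invmx (diag_mx v) = diag_mx (\row_j (v 0 j)^-1).
Proof.
move=> nz.
have h : diag_mx v *m diag_mx (\row_j (v 0 j)^-1) = 1%:M.
  rewrite mulmx_diag; apply/matrixP => i j; rewrite !mxE.
  case: (eqVneq i j) => [->|ne]; first by rewrite mulr1n mulfV.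
  by rewrite mulr0n.
have [u1 u2] := mulmx1_unit h.
by rewrite -[RHS]mul1mx -(mulVmx u1) -mulmxA h mulmx1.
Qed.

End Mat.
Arguments qf_eq0 {R N}. Arguments posdef_psd {R N}. Arguments posdef_unit {R N}.
Arguments inv_sym {R N}. Arguments invK_l {R N}. Arguments invK_r {R N}.
Arguments qf_inv {R N}. Arguments inv_psd {R N}. Arguments inv_mono {R N}.
Arguments qf_diag {R N}. Arguments inv_diag {R N}.
Lemma diag_unit (R : realType) (N : nat) (v : 'rV[R]_N) : (forall i, v 0 i != 0) -> diag_mx v \in unitmx.
Proof.
move=> nz.
have h : diag_mx v *m diag_mx (\row_j (v 0 j)^-1) = 1%:M.
  rewrite mulmx_diag; apply/matrixP => i j; rewrite !mxE.
  case: (eqVneq i j) => [->|ne]; first by rewrite mulr1n mulfV.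
  by rewrite mulr0n.
by have [u1 u2] := mulmx1_unit h.
Qed.


Section Supp.
Variable R : realType.
Variable N : nat.
Implicit Types (x y z q : 'cV[R]_N) (A G : 'M[R]_N) (B : set 'cV[R]_N).

Lemma num_pos_lin (b c : R) : 0 <= c ->
  (forall s, 0 < s -> s <= 1 -> 0 <= s * b + s ^+ 2 * c) -> 0 <= b.
Proof.
move=> c0 h; rewrite leNgt; apply/negP => bn.
set s := - b / (c - b + 1).
have d0 : 0 < c - b + 1 by lra.
have s0 : 0 < s by rewrite /s divr_gt0 // oppr_gt0.
have s1 : s <= 1 by rewrite /s ler_pdivrMr // mul1r; lra.
have := h s s0 s1.
have -> : s * b + s ^+ 2 * c = s * (b * (1 - b) / (c - b + 1)).
  rewrite /s; field; lra.
rewrite pmulr_rge0 //.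
rewrite pmulr_lge0 ?invr_gt0 //.
have : 0 < 1 - b by lra.
move=> h1; rewrite pmulr_lge0 // => h2; lra.
Qed.

Lemma num_zero_lin (b c : R) : 0 <= c ->
  (forall s, 0 <= s * b + s ^+ 2 * c) -> b = 0.
Proof.
move=> c0 h.
have h1 : 0 <= b by apply: (num_pos_lin b c c0) => s _ _; exact: h.
have h2 : 0 <= - b.
  apply: (num_pos_lin (- b) c c0) => s _ _.
  by have := h (- s); rewrite sqrrN mulrN mulNr.
lra.
Qed.

Lemma supp_ub B y x : B x -> ((dot y x)%:E <= supp B y)%E.
Proof. by move=> Bx; apply: ereal_sup_ubound; exists x. Qed.

Lemma supp_gt B y x : B x -> (-oo < supp B y)%E.
Proof. by move=> Bx; apply: lt_le_trans (supp_ub B y x Bx); rewrite ltNye. Qed.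

Lemma supp_conv B y1 y2 (r1 r2 s : R) :
  supp B y1 = r1%:E -> supp B y2 = r2%:E -> 0 <= s -> s <= 1 ->
  (supp B (s *: y1 + (1 - s) *: y2) <= (s * r1 + (1 - s) * r2)%:E)%E.
Proof.
move=> e1 e2 s0 s1; apply/ereal_supP => _ [x Bx <-].
rewrite lee_fin dotDl dotZl dotZl.
have h1 : dot y1 x <= r1 by rewrite -lee_fin -e1; apply: supp_ub Bx.
have h2 : dot y2 x <= r2 by rewrite -lee_fin -e2; apply: supp_ub Bx.
have s2 : 0 <= 1 - s by lra.
by apply: lerD; apply: ler_wpM2l.
Qed.

Definition psi B y : R := fine (supp B y).
Definition fin B y : Prop := supp B y = (psi B y)%:E.

Lemma finP B y (x0 : 'cV[R]_N) : B x0 -> (supp B y < +oo)%E -> fin B y.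
Proof.
move=> Bx lt; rewrite /fin /psi fineK //.
by rewrite fin_numE; apply/andP; split; [rewrite gt_eqF // (supp_gt B y x0 Bx)| rewrite lt_eqF].
Qed.

Lemma fin_conv B y1 y2 s (x0 : 'cV[R]_N) : B x0 -> fin B y1 -> fin B y2 -> 0 <= s -> s <= 1 ->
  fin B (s *: y1 + (1 - s) *: y2) /\
  psi B (s *: y1 + (1 - s) *: y2) <= s * psi B y1 + (1 - s) * psi B y2.
Proof.
move=> Bx f1 f2 s0 s1.
have h := supp_conv B y1 y2 _ _ s f1 f2 s0 s1.
have f : fin B (s *: y1 + (1 - s) *: y2).
  by apply: (finP B _ x0 Bx); apply: le_lt_trans h _; rewrite ltey.
split => //; by rewrite -lee_fin -f.
Qed.

Lemma argmin_foc B (h : 'cV[R]_N -> R) x0 q (D c : R) (b0 : 'cV[R]_N) :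
  B b0 -> fin B x0 -> fin B q -> 0 <= c ->
  (forall q', (supp B x0 + (h x0)%:E <= supp B q' + (h q')%:E)%E) ->
  (forall s, h (x0 + s *: (q - x0)) = h x0 + s * D + s ^+ 2 * c) ->
  psi B x0 - D <= psi B q.
Proof.
move=> Bb f0 fq c0 hmin hexp.
suff : 0 <= psi B q - psi B x0 + D by lra.
apply: (num_pos_lin _ c c0) => s s0 s1.
have ev : x0 + s *: (q - x0) = s *: q + (1 - s) *: x0.
  by apply/matrixP => i j; rewrite !mxE; ring.
have [fs les] := fin_conv B q x0 s b0 Bb fq f0 (ltW s0) s1.
have := hmin (x0 + s *: (q - x0)).
rewrite {1}ev fs f0 -EFinD -EFinD lee_fin hexp.
move: les; rewrite -ev => les.
have e : s * (psi B q - psi B x0 + D) + s ^+ 2 * c = (s * psi B q + (1 - s) * psi B x0) - psi B x0 + s * D + s ^+ 2 * c by ring.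
rewrite e. move=> hh. lra.
Qed.

End Supp.
Arguments num_pos_lin {R}. Arguments num_zero_lin {R}.
Arguments supp_ub {R N}. Arguments supp_gt {R N}. Arguments supp_conv {R N}.
Arguments psi {R N}. Arguments fin {R N}. Arguments finP {R N}. Arguments fin_conv {R N}.
Arguments argmin_foc {R N}.


Section Key.
Variable R : realType.
Variable N : nat.
Variables (Kh Mh Wh : 'M[R]_N) (yd f : 'cV[R]_N) (alpha sigma cn : R).
Hypothesis sM : symmx Mh.
Hypothesis uM : Mh \in unitmx.
Hypothesis al0 : 0 < alpha.
Hypothesis sW : symmx (invmx Wh).
Hypothesis pMi : possemidef (invmx Mh).
Hypothesis hs : forall x, qf (invmx Mh) x <= sigma * dot x x.
Hypothesis hw : forall x, qf (invmx Mh) x <= cn * qf (invmx Wh) x.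

Local Notation Mi := (invmx Mh).
Local Notation Wi := (invmx Wh).

Definition Phi (p l m : 'cV[R]_N) : R := dot (Mh *m f) p + phi Kh Mh yd alpha p l m.

Lemma sMi : symmx Mi. Proof. exact: inv_sym. Qed.

Lemma PhiE p0 l0 m0 p l m :
  Phi p l m = Phi p0 l0 m0 +
   (dot (Mh *m f) (p - p0)
    + dot (Kh^T *m p0 + l0 - Mh *m yd) (Mi *m (Kh^T *m (p - p0) + (l - l0)))
    + alpha^-1 * dot (Mh *m p0 - m0) (Mi *m (Mh *m (p - p0) - (m - m0))))
   + (1/2 * qf Mi (Kh^T *m (p - p0) + (l - l0))
      + 1/(2 * alpha) * qf Mi (Mh *m (p - p0) - (m - m0))).
Proof.
rewrite /Phi /phi.
have e1 : Kh^T *m p + l - Mh *m yd =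
   (Kh^T *m p0 + l0 - Mh *m yd) + (Kh^T *m (p - p0) + (l - l0)).
  by rewrite mulmxBr; apply/matrixP => i j; rewrite !mxE; ring.
have e2 : Mh *m p - m = (Mh *m p0 - m0) + (Mh *m (p - p0) - (m - m0)).
  by rewrite mulmxBr; apply/matrixP => i j; rewrite !mxE; ring.
rewrite e1 e2 !(qfD _ _ _ sMi) dotBr.
have a0 : alpha != 0 by rewrite gt_eqF.
field; exact: a0.
Qed.

Lemma PhiE_dir p0 l0 m0 d s :
  Phi (p0 + s *: d) l0 m0 = Phi p0 l0 m0 +
   s * (dot (Mh *m f) d
    + dot (Kh^T *m p0 + l0 - Mh *m yd) (Mi *m (Kh^T *m d))
    + alpha^-1 * dot (Mh *m p0 - m0) (Mi *m (Mh *m d)))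
   + s ^+ 2 * (1/2 * qf Mi (Kh^T *m d) + 1/(2 * alpha) * qf Mi (Mh *m d)).
Proof.
rewrite (PhiE p0 l0 m0).
have -> : p0 + s *: d - p0 = s *: d by apply/matrixP => i j; rewrite !mxE; ring.
rewrite !subrr addr0 subr0.
rewrite -!scalemxAr !qfZ !dotZr.
ring.
Qed.

Lemma pstat pt l m dp :
  (forall q, dot (Mh *m f) pt + phi Kh Mh yd alpha pt l m - dot dp pt
     <= dot (Mh *m f) q + phi Kh Mh yd alpha q l m - dot dp q) ->
  forall d, dot (Mh *m f) d
    + dot (Kh^T *m pt + l - Mh *m yd) (Mi *m (Kh^T *m d))
    + alpha^-1 * dot (Mh *m pt - m) (Mi *m (Mh *m d)) = dot dp d.
Proof.
move=> hmin d.
apply/eqP; rewrite -subr_eq0; apply/eqP.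
set c := 1/2 * qf Mi (Kh^T *m d) + 1/(2 * alpha) * qf Mi (Mh *m d).
have c0 : 0 <= c.
  rewrite /c; apply: addr_ge0; apply: mulr_ge0; rewrite ?pMi //.
  by rewrite divr_ge0 // mulr_ge0 // ltW.
apply: (num_zero_lin _ c c0) => s.
have := hmin (pt + s *: d).
rewrite /c; move: (PhiE_dir pt l m d s); rewrite /Phi !dotDr !dotZr. lra.
Qed.

Hypothesis sg0 : 0 <= sigma.

Lemma sSM : symmx (sigma%:M - Mi).
Proof. by rewrite /symmx linearB /= tr_scalar_mx sMi. Qed.

Lemma sCW : symmx (cn *: Wi - Mi).
Proof. by rewrite /symmx linearB /= linearZ /= sW sMi. Qed.

Lemma lstep (C : set 'cV[R]_N) b0 pt l lt dl q :
  C b0 -> fin C lt -> fin C q ->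
  (forall q', (supp C lt + (1/2 * qf Mi (lt - Mh *m yd + Kh^T *m pt)
        + 1/2 * qf (sigma%:M - Mi) (lt - l) - dot dl lt)%:E
     <= supp C q' + (1/2 * qf Mi (q' - Mh *m yd + Kh^T *m pt)
        + 1/2 * qf (sigma%:M - Mi) (q' - l) - dot dl q')%:E)%E) ->
  psi C lt - (dot (Kh^T *m pt + l - Mh *m yd) (Mi *m (q - lt))
     + sigma * dot (lt - l) (q - lt) - dot dl (q - lt)) <= psi C q.
Proof.
move=> Cb flt fq hmin.
set d := q - lt.
pose h := fun q' => 1/2 * qf Mi (q' - Mh *m yd + Kh^T *m pt)
        + 1/2 * qf (sigma%:M - Mi) (q' - l) - dot dl q'.
pose D := dot (lt - Mh *m yd + Kh^T *m pt) (Mi *m d)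
   + dot (lt - l) ((sigma%:M - Mi) *m d) - dot dl d.
pose c := 1/2 * qf Mi d + 1/2 * qf (sigma%:M - Mi) d.
have ec : c = 1/2 * (sigma * dot d d) by rewrite /c qf_subm qf_scalar; ring.
have c0 : 0 <= c by rewrite ec mulr_ge0 // mulr_ge0 // dot_ge0.
have hexp : forall s, h (lt + s *: (q - lt)) = h lt + s * D + s ^+ 2 * c.
  move=> s; rewrite /h -/d.
  have -> : lt + s *: d - Mh *m yd + Kh^T *m pt = (lt - Mh *m yd + Kh^T *m pt) + s *: d.
    by apply/matrixP => i j; rewrite !mxE; ring.
  have -> : lt + s *: d - l = (lt - l) + s *: d.
    by apply/matrixP => i j; rewrite !mxE; ring.
  rewrite (qfD _ _ _ sMi) (qfD _ _ _ sSM) !qfZ -!scalemxAr !dotZr dotDr dotZr /D /c.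
  by field.
have := argmin_foc C h lt q D c b0 Cb flt fq c0 hmin hexp.
have -> : D = dot (Kh^T *m pt + l - Mh *m yd) (Mi *m (q - lt))
     + sigma * dot (lt - l) (q - lt) - dot dl (q - lt).
  rewrite /D -/d.
  have -> : lt - Mh *m yd + Kh^T *m pt = (Kh^T *m pt + l - Mh *m yd) + (lt - l).
    by apply/matrixP => i j; rewrite !mxE; ring.
  rewrite [dot (_ + (lt - l)) _]dotDl mulmxBl mul_scalar_mx [dot (lt - l) (_ - _)]dotBr dotZr; ring.
by [].
Qed.

Lemma mstep (S : set 'cV[R]_N) b0 pt m mt dm q :
  S b0 -> fin S mt -> fin S q ->
  (forall q', (supp S mt + (1/(2 * alpha) * qf Mi (mt - Mh *m pt)
        + 1/(2 * alpha) * qf (cn *: Wi - Mi) (mt - m) - dot dm mt)%:E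
     <= supp S q' + (1/(2 * alpha) * qf Mi (q' - Mh *m pt)
        + 1/(2 * alpha) * qf (cn *: Wi - Mi) (q' - m) - dot dm q')%:E)%E) ->
  psi S mt - (alpha^-1 * (- dot (Mh *m pt - m) (Mi *m (q - mt))
     + cn * dot (mt - m) (Wi *m (q - mt))) - dot dm (q - mt)) <= psi S q.
Proof.
move=> Sb fmt fq hmin.
set d := q - mt.
pose h := fun q' => 1/(2 * alpha) * qf Mi (q' - Mh *m pt)
        + 1/(2 * alpha) * qf (cn *: Wi - Mi) (q' - m) - dot dm q'.
pose D := 1/(2 * alpha) * (2 * dot (mt - Mh *m pt) (Mi *m d))
   + 1/(2 * alpha) * (2 * dot (mt - m) ((cn *: Wi - Mi) *m d)) - dot dm d.
pose c := 1/(2 * alpha) * qf Mi d + 1/(2 * alpha) * qf (cn *: Wi - Mi) d.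
have ec : c = 1/(2 * alpha) * (cn * qf Wi d) by rewrite /c qf_subm qf_scalem; ring.
have c0 : 0 <= c.
  rewrite ec mulr_ge0 //; first by rewrite divr_ge0 // mulr_ge0 // ltW.
  by apply: le_trans (hw d); apply: pMi.
have hexp : forall s, h (mt + s *: (q - mt)) = h mt + s * D + s ^+ 2 * c.
  move=> s; rewrite /h -/d.
  have -> : mt + s *: d - Mh *m pt = (mt - Mh *m pt) + s *: d.
    by apply/matrixP => i j; rewrite !mxE; ring.
  have -> : mt + s *: d - m = (mt - m) + s *: d.
    by apply/matrixP => i j; rewrite !mxE; ring.
  rewrite (qfD _ _ _ sMi) (qfD _ _ _ sCW) !qfZ -!scalemxAr !dotZr dotDr dotZr /D /c.
  ring.
have := argmin_foc S h mt q D c b0 Sb fmt fq c0 hmin hexp.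
have -> : D = alpha^-1 * (- dot (Mh *m pt - m) (Mi *m (q - mt))
     + cn * dot (mt - m) (Wi *m (q - mt))) - dot dm (q - mt).
  rewrite /D -/d.
  have -> : mt - Mh *m pt = (mt - m) - (Mh *m pt - m).
    by apply/matrixP => i j; rewrite !mxE; ring.
  rewrite [dot (mt - m - _) _]dotBl mulmxBl -scalemxAl [dot (mt - m) (_ - _)]dotBr dotZr.
  have a0 : alpha != 0 by rewrite gt_eqF.
  by field.
by [].
Qed.

Definition nH (lam mu : 'cV[R]_N) : R := sigma * dot lam lam + cn / alpha * qf Wi mu.
Definition Freal (C S : set 'cV[R]_N) p lam mu : R := Phi p lam mu + psi C lam + psi S mu.

Lemma dotsq (a b : 'cV[R]_N) : dot (a + b) (a + b) = dot a a + 2 * dot a b + dot b b.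
Proof. by rewrite dotDl !dotDr (dotC b a); ring. Qed.

Lemma KI (C S : set 'cV[R]_N) bC bS pt lt mt l m dp dl dm p lam mu :
  C bC -> S bS -> fin C lt -> fin S mt -> fin C lam -> fin S mu ->
  (forall q, dot (Mh *m f) pt + phi Kh Mh yd alpha pt l m - dot dp pt
     <= dot (Mh *m f) q + phi Kh Mh yd alpha q l m - dot dp q) ->
  (forall q', (supp C lt + (1/2 * qf Mi (lt - Mh *m yd + Kh^T *m pt)
        + 1/2 * qf (sigma%:M - Mi) (lt - l) - dot dl lt)%:E
     <= supp C q' + (1/2 * qf Mi (q' - Mh *m yd + Kh^T *m pt)
        + 1/2 * qf (sigma%:M - Mi) (q' - l) - dot dl q')%:E)%E) ->
  (forall q', (supp S mt + (1/(2 * alpha) * qf Mi (mt - Mh *m pt)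
        + 1/(2 * alpha) * qf (cn *: Wi - Mi) (mt - m) - dot dm mt)%:E
     <= supp S q' + (1/(2 * alpha) * qf Mi (q' - Mh *m pt)
        + 1/(2 * alpha) * qf (cn *: Wi - Mi) (q' - m) - dot dm q')%:E)%E) ->
  Freal C S pt lt mt + 1/2 * nH (lam - lt) (mu - mt)
   <= Freal C S p lam mu + 1/2 * nH (lam - l) (mu - m)
      + dot dp (pt - p) + dot dl (lt - lam) + dot dm (mt - mu).
Proof.
move=> hC hS flt fmt flam fmu hp hl hm.
have st := pstat pt l m dp hp (p - pt).
have L := lstep C bC pt l lt dl lam hC flt flam hl.
have Mu := mstep S bS pt m mt dm mu hS fmt fmu hm.
have E1 := PhiE pt l m p lam mu.
have E2 := PhiE pt l m pt lt mt.
rewrite subrr !mulmx0 !add0r qfN dot0r mulmxN dotNr in E2.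
rewrite [Mi *m (_ + _)]mulmxDr [Mi *m (_ - (mu - m))]mulmxBr [dot _ (Mi *m _ + _)]dotDr [dot _ (Mi *m _ - _)]dotBr in E1.
set r1 := Kh^T *m pt + l - Mh *m yd in st L E1 E2.
set r2 := Mh *m pt - m in st Mu E1 E2.
have ea : 1 / (2 * alpha) = alpha^-1 / 2.
  have a0 : alpha != 0 by rewrite gt_eqF.
  by field.
rewrite ea in E1 E2.
set ia := alpha^-1 in st Mu E1 E2 ea.
have ia0 : 0 <= ia by rewrite /ia invr_ge0 ltW.
have q1 := pMi (Kh^T *m (p - pt) + (lam - l)).
have q2 := pMi (Mh *m (p - pt) - (mu - m)).
have q2' : 0 <= ia * qf Mi (Mh *m (p - pt) - (mu - m)) by apply: mulr_ge0.
have b1 := hs (lt - l).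
have b2 : ia * qf Mi (mt - m) <= ia * (cn * qf Wi (mt - m)) by apply: ler_wpM2l.
have el : lam - l = (lt - l) + (lam - lt) by apply/matrixP => i j; rewrite !mxE; ring.
have em : mu - m = (mt - m) + (mu - mt) by apply/matrixP => i j; rewrite !mxE; ring.
have d1 : dot r1 (Mi *m (lam - l)) = dot r1 (Mi *m (lt - l)) + dot r1 (Mi *m (lam - lt)).
  by rewrite el mulmxDr dotDr.
have d2 : dot r2 (Mi *m (mu - m)) = dot r2 (Mi *m (mt - m)) + dot r2 (Mi *m (mu - mt)).
  by rewrite em mulmxDr dotDr.
have t1 : sigma * dot (lam - l) (lam - l) = sigma * (dot (lt - l) (lt - l)
    + 2 * dot (lt - l) (lam - lt) + dot (lam - lt) (lam - lt)).
  by rewrite el dotsq.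
have t2 : cn / alpha * qf Wi (mu - m) = cn * ia * (qf Wi (mt - m)
    + 2 * dot (mt - m) (Wi *m (mu - mt)) + qf Wi (mu - mt)).
  by rewrite em (qfD _ _ _ sW) /ia.
have t3 : cn / alpha * qf Wi (mu - mt) = cn * ia * qf Wi (mu - mt) by [].
have t4 : cn / alpha * qf Wi (mt - m) = cn * ia * qf Wi (mt - m) by [].
have ep1 : dot dp (pt - p) = - dot dp (p - pt) by rewrite !dotBr; ring.
have ep2 : dot dl (lt - lam) = - dot dl (lam - lt) by rewrite !dotBr; ring.
have ep3 : dot dm (mt - mu) = - dot dm (mu - mt) by rewrite !dotBr; ring.
rewrite /Freal /nH ep1 ep2 ep3 t1 t3.
rewrite -/ia in t2 t3 t4.
move: E1 E2 st L Mu; rewrite d1 d2 => E1 E2 st L Mu.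
rewrite t2.
nra.
Qed.

Lemma dot_eq0 (x : 'cV[R]_N) : dot x x = 0 -> x = 0.
Proof.
rewrite dotE => h; apply/matrixP => i j; rewrite mxE (ord1 j).
have hh : forall i : 'I_N, true -> 0 <= x i 0 * x i 0 by move=> k _; rewrite -expr2 sqr_ge0.
have := psumr_eq0P hh h (i := i) isT.
by move/eqP; rewrite mulf_eq0 orbb => /eqP.
Qed.

Lemma dot_ext (v w : 'cV[R]_N) : (forall d, dot v d = dot w d) -> v = w.
Proof.
move=> h; apply/eqP; rewrite -subr_eq0; apply/eqP; apply: dot_eq0.
by rewrite dotBl h subrr.
Qed.

Definition AA := Kh *m Mi *m Kh^T + alpha^-1 *: Mh.
Definition bvec (l m : 'cV[R]_N) := Mh *m f - Kh *m Mi *m (Mh *m yd) + Kh *m Mi *m l - alpha^-1 *: m.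
Definition Gform (p l m d : 'cV[R]_N) : R := dot (Mh *m f) d
    + dot (Kh^T *m p + l - Mh *m yd) (Mi *m (Kh^T *m d))
    + alpha^-1 * dot (Mh *m p - m) (Mi *m (Mh *m d)).

Lemma Gform_vec p l m d : Gform p l m d = dot (AA *m p + bvec l m) d.
Proof.
rewrite /Gform.
rewrite (dot_mull _ Mi) sMi (dot_mull _ (Kh^T)) trmxK.
rewrite (dot_mull _ Mi) sMi (dot_mull _ Mh) sM invK_l //.
rewrite -dotZl -!dotDl; congr dot.
rewrite /AA /bvec mulmxDl -scalemxAl !mulmxBr !mulmxDr !mulmxA.
by apply/matrixP => i j; rewrite !mxE; ring.
Qed.

Lemma stat_vec p l m dp : (forall d, Gform p l m d = dot dp d) -> AA *m p + bvec l m = dp.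
Proof. by move=> h; apply: dot_ext => d; rewrite -Gform_vec. Qed.

Lemma comb (t : R) xt xh xs lk mk lh mh ls ms dp :
  AA *m xt + bvec lk mk = dp -> AA *m xh + bvec lh mh = 0 -> AA *m xs + bvec ls ms = 0 ->
  AA *m (t *: xt - (t - 1) *: xh - xs) =
   t *: dp - Kh *m Mi *m (t *: lk - (t - 1) *: lh - ls)
   + alpha^-1 *: (t *: mk - (t - 1) *: mh - ms).
Proof.
move=> e1 e2 e3.
have h1 : AA *m xt = dp - bvec lk mk by rewrite -e1 addrK.
have h2 : AA *m xh = - bvec lh mh by apply/eqP; rewrite -addr_eq0 e2.
have h3 : AA *m xs = - bvec ls ms by apply/eqP; rewrite -addr_eq0 e3.
rewrite !mulmxBr -!scalemxAr h1 h2 h3 /bvec.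
by apply/matrixP => i j; rewrite !mxE; ring.
Qed.

Lemma Phi_dir3 p0 l0 m0 dp dl dm s :
  Phi (p0 + s *: dp) (l0 + s *: dl) (m0 + s *: dm) = Phi p0 l0 m0 +
   s * (dot (Mh *m f) dp
    + dot (Kh^T *m p0 + l0 - Mh *m yd) (Mi *m (Kh^T *m dp + dl))
    + alpha^-1 * dot (Mh *m p0 - m0) (Mi *m (Mh *m dp - dm)))
   + s ^+ 2 * (1/2 * qf Mi (Kh^T *m dp + dl) + 1/(2 * alpha) * qf Mi (Mh *m dp - dm)).
Proof.
rewrite (PhiE p0 l0 m0).
have -> : p0 + s *: dp - p0 = s *: dp by apply/matrixP => i j; rewrite !mxE; ring.
have -> : l0 + s *: dl - l0 = s *: dl by apply/matrixP => i j; rewrite !mxE; ring.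
have -> : m0 + s *: dm - m0 = s *: dm by apply/matrixP => i j; rewrite !mxE; ring.
have -> : Kh^T *m (s *: dp) + s *: dl = s *: (Kh^T *m dp + dl).
  by rewrite -scalemxAr scalerDr.
have -> : Mh *m (s *: dp) - s *: dm = s *: (Mh *m dp - dm).
  by rewrite -scalemxAr scalerBr.
rewrite !qfZ -!scalemxAr !dotZr.
ring.
Qed.

Lemma Phi_conv p1 l1 m1 p2 l2 m2 s : 0 <= s -> s <= 1 ->
  Phi (s *: p1 + (1 - s) *: p2) (s *: l1 + (1 - s) *: l2) (s *: m1 + (1 - s) *: m2)
  <= s * Phi p1 l1 m1 + (1 - s) * Phi p2 l2 m2.
Proof.
move=> s0 s1.
have ev : forall a b : 'cV[R]_N, s *: a + (1 - s) *: b = b + s *: (a - b).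
  by move=> a b; apply/matrixP => i j; rewrite !mxE; ring.
have ev1 : forall a b : 'cV[R]_N, a = b + 1 *: (a - b).
  by move=> a b; apply/matrixP => i j; rewrite !mxE; ring.
rewrite !ev (Phi_dir3 p2 l2 m2).
rewrite [Phi p1 l1 m1](_ : _ = Phi (p2 + 1 *: (p1 - p2)) (l2 + 1 *: (l1 - l2)) (m2 + 1 *: (m1 - m2))); last by rewrite -!ev1.
rewrite (Phi_dir3 p2 l2 m2) expr1n.
set G := (X in _ + s * X + _ <= _).
set Q := (X in _ + _ + s ^+ 2 * X <= _).
have Q0 : 0 <= Q.
  rewrite /Q; apply: addr_ge0; apply: mulr_ge0; rewrite ?pMi //.
  by rewrite divr_ge0 // mulr_ge0 // ltW.
have : 0 <= s * (1 - s) * Q by rewrite mulr_ge0 // mulr_ge0 // subr_ge0.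
rewrite [1 * G]mul1r [1 * Q]mul1r. nra.
Qed.

Lemma nH_ge0 a b : 0 <= nH a b.
Proof.
rewrite /nH; apply: addr_ge0; first by rewrite mulr_ge0 // dot_ge0.
rewrite mulrAC; apply: mulr_ge0; [exact: le_trans (pMi b) (hw b) | by rewrite invr_ge0 ltW].
Qed.

Lemma nHZ (c : R) a b : nH (c *: a) (c *: b) = c ^+ 2 * nH a b.
Proof. by rewrite /nH qfZ dotZl dotZr; ring. Qed.

Lemma nH_lbl a b : sigma * dot a a <= nH a b.
Proof.
rewrite /nH lerDl mulrAC; apply: mulr_ge0; [exact: le_trans (pMi b) (hw b) | by rewrite invr_ge0 ltW].
Qed.

Lemma nH_lbm a b : cn / alpha * qf Wi b <= nH a b.
Proof. by rewrite /nH lerDr mulr_ge0 // dot_ge0. Qed.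

End Key.


Section Scal.
Variable R : realType.

Lemma tacc_ge1 j : 1 <= (tacc j : R).
Proof.
elim: j => [|j IH] /=; first by [].
have : 1 <= Num.sqrt (1 + 4 * (tacc j : R) ^+ 2).
  rewrite -{1}sqrtr1; apply: ler_wsqrtr.
  have := sqr_ge0 (tacc j : R); lra.
lra.
Qed.

Lemma tacc_S_ge j : (tacc j : R) + 1/2 <= tacc j.+1.
Proof.
rewrite /=.
have h0 := tacc_ge1 j.
have : 2 * (tacc j : R) <= Num.sqrt (1 + 4 * (tacc j : R) ^+ 2).
  have -> : 2 * (tacc j : R) = Num.sqrt ((2 * tacc j) ^+ 2).
    by rewrite sqrtr_sqr ger0_norm //; lra.
  apply: ler_wsqrtr; rewrite exprMn; lra.
lra.
Qed.

Lemma tacc_S_le j : (tacc j.+1 : R) <= tacc j + 1.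
Proof.
rewrite /=.
have h0 := tacc_ge1 j.
have : Num.sqrt (1 + 4 * (tacc j : R) ^+ 2) <= 1 + 2 * tacc j.
  have -> : 1 + 2 * (tacc j : R) = Num.sqrt ((1 + 2 * tacc j) ^+ 2).
    by rewrite sqrtr_sqr ger0_norm //; lra.
  apply: ler_wsqrtr; nra.
lra.
Qed.

Lemma tacc_rel j : (tacc j.+1 : R) ^+ 2 - tacc j.+1 = tacc j ^+ 2.
Proof.
rewrite /=.
set t := (tacc j : R).
have h : Num.sqrt (1 + 4 * t ^+ 2) ^+ 2 = 1 + 4 * t ^+ 2.
  by rewrite sqr_sqrtr //; have := sqr_ge0 t; lra.
move: h; set S := Num.sqrt _ => h.
rewrite expr2 in h *; rewrite expr2. 
nra.
Qed.

Lemma tacc_lb j : ((j.+2)%:R / 2 : R) <= tacc j.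
Proof.
elim: j => [|j IH]; first by rewrite /= divff.
have := tacc_S_ge j; rewrite -[(j.+3)%:R]natr1 -[(j.+2)%:R]natr1 in IH *; lra.
Qed.

Lemma tacc_ub j : (tacc j : R) <= j.+1%:R.
Proof.
elim: j => [|j IH]; first by [].
have := tacc_S_le j; rewrite -[(j.+2)%:R]natr1; lra.
Qed.

Lemma sq_le (x y c : R) : 0 <= x -> 0 <= y -> 0 <= c -> x ^+ 2 <= c * y ^+ 2 -> x <= (1 + c) * y.
Proof.
move=> x0 y0 c0 h.
have h1 : c * y ^+ 2 <= ((1 + c) * y) ^+ 2 by rewrite exprMn; apply: ler_wpM2r; [exact: sqr_ge0| nra].
have h2 : x ^+ 2 <= ((1 + c) * y) ^+ 2 by apply: le_trans h h1.
rewrite -ler_sqr //; rewrite ?nnegrE //; apply: mulr_ge0 => //; lra.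
Qed.

Lemma lin_le (x b c : R) : 0 <= x -> 0 <= b -> 0 < c -> c * x ^+ 2 <= x * b -> x <= c^-1 * b.
Proof.
move=> x0 b0 c0 h.
case: (eqVneq x 0) => [->|nz]; first by rewrite mulr_ge0 // invr_ge0 ltW.
have xp : 0 < x by rewrite lt_def nz x0.
have h2 : c * x <= b.
  rewrite expr2 mulrA [_ * x]mulrC in h.
  by rewrite -(ler_pM2l xp).
by rewrite ler_pdivlMl.
Qed.

Lemma quad_contra (a B S c : R) : 0 <= S -> 0 <= c -> 0 <= a -> B = S + 3 * c + 1 ->
  a ^+ 2 <= S + 2 * c * B + c * a -> a <= B.
Proof.
move=> S0 c0 a0 eB h; rewrite leNgt; apply/negP => aB.
have h1 : 0 <= (a - B) * (a + B - c) by apply: mulr_ge0; lra.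
have h2 : 0 <= (B - 1) * S by apply: mulr_ge0; lra.
have h3 : B * B = B * (S + 3 * c + 1) by rewrite -eB.
nra.
Qed.

Lemma rec_bound (E a lam : nat -> R) (C Lam : R) :
  0 <= C -> (forall k, 0 <= lam k) -> (forall k, 0 <= a k) ->
  (forall k, \sum_(1 <= j < k.+1) lam j <= Lam) ->
  (forall k, E k.+1 <= E k + C * lam k.+1 * (lam k.+1 + a k + a k.+1)) ->
  (forall k, a k ^+ 2 / 2 <= E k) ->
  exists Eb, forall k, E k <= Eb.
Proof.
move=> C0 l0 a0 hS hrec hE.
have L0 : 0 <= Lam by have := hS 0%N; rewrite big_geq.
have lL : forall k, lam k.+1 <= Lam.
  move=> k; apply: le_trans (hS k.+1).
  rewrite big_nat_recr //=; rewrite lerDr; apply: sumr_ge0 => i _; exact: l0.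
set S0 := 2 * E 0%N + 2 * C * Lam ^+ 2.
set c := 2 * C * Lam.
set B := S0 + 3 * c + 1.
have E00 : 0 <= E 0%N by have := hE 0%N; have := sqr_ge0 (a 0%N); lra.
have S00 : 0 <= S0 by rewrite /S0; have := sqr_ge0 Lam; nra.
have c0 : 0 <= c by rewrite /c; nra.
pose Sk k := \sum_(1 <= j < k.+1) lam j.
have inv : forall k, a k <= B /\ E k <= E 0%N + C * (Lam + 2 * B) * Sk k.
  elim => [|k [IHa IHE]].
    split; last by rewrite /Sk big_geq // mulr0 addr0.
    have h := hE 0%N.
    have : a 0%N <= 1 + a 0%N ^+ 2 by have := sqr_ge0 (a 0%N - 1/2); nra.
    have : 2 * E 0%N <= S0 by rewrite /S0; have := sqr_ge0 Lam; nra.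
    rewrite /B; lra.
  have eS : Sk k.+1 = Sk k + lam k.+1 by rewrite /Sk big_nat_recr.
  have Sk0 : 0 <= Sk k by apply: sumr_ge0 => i _; exact: l0.
  have SkL : Sk k.+1 <= Lam by exact: hS.
  have hr := hrec k.
  have lk0 := l0 k.+1; have lkL := lL k.
  have ak0 := a0 k.+1.
  have hEk := hE k.+1.
  have B0 : 0 <= B by rewrite /B; lra.
  have ha : a k.+1 <= B.
    apply: (quad_contra (a k.+1) B S0 c S00 c0 ak0 (erefl B)).
    have t1 : C * lam k.+1 * a k <= C * lam k.+1 * B by apply: ler_wpM2l; [nra|].
    have t2 : C * lam k.+1 * a k.+1 <= C * Lam * a k.+1 by apply: ler_wpM2r => //; nra.
    have t3 : C * (Lam + 2 * B) * (Sk k + lam k.+1) <= C * (Lam + 2 * B) * Lam.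
      apply: ler_wpM2l; [nra| lra].
    have t4 : C * lam k.+1 * lam k.+1 <= C * Lam * lam k.+1 by apply: ler_wpM2r => //; apply: ler_wpM2l.
    have t5 : 0 <= C * lam k.+1 * B by apply: mulr_ge0 => //; apply: mulr_ge0.
    rewrite /S0 /c; lra.
  split => //.
  rewrite eS.
  have t1 : C * lam k.+1 * a k <= C * lam k.+1 * B by apply: ler_wpM2l; [nra|].
  have t2 : C * lam k.+1 * a k.+1 <= C * lam k.+1 * B by apply: ler_wpM2l; [nra|].
  have t4 : C * lam k.+1 * lam k.+1 <= C * lam k.+1 * Lam by apply: ler_wpM2l; [nra|].
  nra.
exists (E 0%N + C * (Lam + 2 * B) * Lam) => k.
have [_ h] := inv k.
apply: le_trans h _; apply: lerD => //; apply: ler_wpM2l; last exact: hS.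
have : 0 <= B by rewrite /B; lra.
nra.
Qed.

End Scal.


Section Main.
Variables (R : realType) (N n : nat) (Kh Mh Wh Dh : 'M[R]_N)
  (yd f : 'cV[R]_N) (alpha del a b cn omega_m sigma : R) (w : 'rV[R]_N)
  (eps : nat -> R)
  (pt lt mt p l m dp dl dm : nat -> 'cV[R]_N)
  (pstar lstar mstar : 'cV[R]_N).
Hypothesis hn : (n = 2 \/ n = 3)%N.
Hypothesis hcn : cn = (if n == 2%N then 4 else 5).
Hypothesis sM : symmx Mh.
Hypothesis pdM : posdef Mh.
Hypothesis hWd : Wh = diag_mx w.
Hypothesis hw0 : forall i, 0 < w 0 i.
Hypothesis hWM : forall z, qf Mh z <= qf Wh z /\ qf Wh z <= cn * qf Mh z.
Variable i0 : 'I_N.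
Hypothesis hi0 : forall i, w 0 i0 <= w 0 i.
Hypothesis hom : omega_m = (w 0 i0)^-1.
Hypothesis hsig : sigma = cn * omega_m.
Hypothesis al0 : 0 < alpha.
Hypothesis del0 : 0 < del.
Hypothesis hab : a <= b.

Implicit Types x y : 'cV[R]_N.
Local Notation Mi := (invmx Mh).
Local Notation Wi := (invmx Wh).

Lemma cn_pos : 0 < cn.
Proof. by rewrite hcn; case: (n == 2)%N. Qed.

Lemma uM : Mh \in unitmx.
Proof. exact: posdef_unit Mh sM pdM. Qed.

Lemma pMi : possemidef Mi.
Proof. exact: inv_psd Mh sM uM (posdef_psd Mh pdM). Qed.

Lemma wnz : forall i, w 0 i != 0.
Proof. by move=> i; rewrite gt_eqF. Qed.

Lemma WiE : Wi = diag_mx (\row_j (w 0 j)^-1).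
Proof. by rewrite hWd inv_diag //; exact: wnz. Qed.

Lemma sWi : symmx Wi.
Proof. by rewrite WiE /symmx tr_diag_mx. Qed.

Lemma qfWi x : qf Wi x = \sum_i (w 0 i)^-1 * x i 0 ^+ 2.
Proof. by rewrite WiE qf_diag; apply: eq_bigr => i _; rewrite mxE. Qed.

Lemma qfW x : qf Wh x = \sum_i w 0 i * x i 0 ^+ 2.
Proof. by rewrite hWd qf_diag. Qed.

Lemma dotE2 x : dot x x = \sum_i x i 0 ^+ 2.
Proof. by rewrite dotE; apply: eq_bigr => i _; rewrite expr2. Qed.

Lemma hw : forall x, qf Mi x <= cn * qf Wi x.
Proof.
have cn0 := cn_pos.
have uW : Wh \in unitmx by rewrite hWd; exact: (diag_unit R N w wnz).
have uG1 : cn^-1 *: Wh \in unitmx by rewrite unitmxZ // unitfE invr_eq0 gt_eqF.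
have h := @inv_mono R N (cn^-1 *: Wh) Mh.
move=> x.
have := h _ sM uG1 uM _ _ x.
rewrite invmxZ // invrK qf_scalem; apply.
- by rewrite /symmx linearZ /= hWd tr_diag_mx.
- move=> y; rewrite qf_scalem qfW; apply: mulr_ge0; first by rewrite invr_ge0 ltW.
  by apply: sumr_ge0 => i _; apply: mulr_ge0; [exact: ltW | exact: sqr_ge0].
- move=> y; rewrite qf_scalem ler_pdivrMl //; exact: (proj2 (hWM y)).
Qed.

Lemma om_pos : 0 < omega_m.
Proof. by rewrite hom invr_gt0. Qed.

Lemma hWi_up x : qf Wi x <= omega_m * dot x x.
Proof.
rewrite qfWi dotE2 mulr_sumr; apply: ler_sum => i _.
apply: ler_wpM2r; first exact: sqr_ge0.
by rewrite hom lef_pV2 ?posrE.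
Qed.

Lemma hs : forall x, qf Mi x <= sigma * dot x x.
Proof.
move=> x; apply: le_trans (hw x) _; rewrite hsig -mulrA.
by apply: ler_wpM2l; [exact: ltW cn_pos | exact: hWi_up].
Qed.

Lemma sg_pos : 0 < sigma.
Proof. by rewrite hsig mulr_gt0 // ?cn_pos ?om_pos. Qed.

Definition Sw := \sum_i w 0 i.

Lemma Sw_pos : 0 <= Sw.
Proof. by apply: sumr_ge0 => i _; exact: ltW. Qed.

Lemma hWi_lb x : dot x x <= Sw * qf Wi x.
Proof.
rewrite qfWi dotE2 mulr_sumr; apply: ler_sum => i _.
rewrite mulrA; rewrite -[X in X <= _]mul1r; apply: ler_wpM2r; first exact: sqr_ge0.
have wi := hw0 i.
have : w 0 i <= Sw by rewrite /Sw (bigD1 i) //= lerDl; apply: sumr_ge0 => j _; exact: ltW.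
by move=> h; rewrite ler_pdivlMr // mul1r.
Qed.

Lemma hM_lb x : w 0 i0 * dot x x <= cn * qf Mh x.
Proof.
apply: le_trans (proj2 (hWM x)); rewrite qfW dotE2 mulr_sumr; apply: ler_sum => i _.
by apply: ler_wpM2r; [exact: sqr_ge0 | exact: hi0].
Qed.


Lemma fin_le (B : set 'cV[R]_N) b0 u v (x y : R) : B b0 -> fin B v ->
  (supp B u + x%:E <= supp B v + y%:E)%E -> fin B u.
Proof.
move=> Bb fv h; apply: (finP B u b0 Bb); move: h; rewrite fv -EFinD.
by case: (supp B u) => [r| |] //= _; rewrite ltry.
Qed.

Lemma fin3 (B1 B2 : set 'cV[R]_N) b1 b2 u v (x y : R) : B1 b1 -> B2 b2 ->
  ((x%:E + supp B1 u) + supp B2 v <= y%:E)%E -> fin B1 u /\ fin B2 v.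
Proof.
move=> h1 h2 h.
have g1 := supp_gt B1 u b1 h1; have g2 := supp_gt B2 v b2 h2.
split.
  apply: (finP B1 u b1 h1); move: h g1 g2.
  case: (supp B1 u) => [r| |] //=.
  by case: (supp B2 v) => [r'| |].
apply: (finP B2 v b2 h2); move: h g1 g2.
case: (supp B2 v) => [r| |] //=.
by case: (supp B1 u) => [r'| |].
Qed.


Local Notation C := (ellC Dh del).
Local Notation S := (@boxS R N a b).
Local Notation Fr := (Freal R N Kh Mh yd f alpha C S).

Hypothesis hl1 : l 1%N = lt 0%N.
Hypothesis hm1 : m 1%N = mt 0%N.
Hypothesis hdl : l 1%N \in supp_dom (ellC Dh del).
Hypothesis hdm : m 1%N \in supp_dom (boxS a b).
Hypothesis hP : forall k, (1 <= k)%N -> forall q : 'cV[R]_N,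
     dot (Mh *m f) (pt k) + phi Kh Mh yd alpha (pt k) (l k) (m k) - dot (dp k) (pt k)
     <= dot (Mh *m f) q + phi Kh Mh yd alpha q (l k) (m k) - dot (dp k) q.
Hypothesis hL : forall k, (1 <= k)%N -> forall q : 'cV[R]_N,
     (supp (ellC Dh del) (lt k)
      + (1/2 * qf (invmx Mh) (lt k - Mh *m yd + Kh^T *m pt k)
         + 1/2 * qf (sigma%:M - invmx Mh) (lt k - l k)
         - dot (dl k) (lt k))%:E
     <= supp (ellC Dh del) q
      + (1/2 * qf (invmx Mh) (q - Mh *m yd + Kh^T *m pt k)
         + 1/2 * qf (sigma%:M - invmx Mh) (q - l k)
         - dot (dl k) q)%:E)%E.
Hypothesis hMu : forall k, (1 <= k)%N -> forall q : 'cV[R]_N,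
     (supp (boxS a b) (mt k)
      + (1/(2 * alpha) * qf (invmx Mh) (mt k - Mh *m pt k)
         + 1/(2 * alpha) * qf (cn *: invmx Wh - invmx Mh) (mt k - m k)
         - dot (dm k) (mt k))%:E
     <= supp (boxS a b) q
      + (1/(2 * alpha) * qf (invmx Mh) (q - Mh *m pt k)
         + 1/(2 * alpha) * qf (cn *: invmx Wh - invmx Mh) (q - m k)
         - dot (dm k) q)%:E)%E.
Hypothesis hmin : forall q1 q2 q3 : 'cV[R]_N,
     (Fobj Kh Mh Dh yd f alpha del a b pstar lstar mstar
      <= Fobj Kh Mh Dh yd f alpha del a b q1 q2 q3)%E.

Lemma C0 : C 0.
Proof. by rewrite /ellC /= qfE mulmx0 dot0r; exact: ltW. Qed.

Lemma S0 : S (const_mx a).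
Proof. by move=> i; rewrite mxE lexx hab. Qed.

Lemma flt0 : fin C (lt 0%N).
Proof. by rewrite -hl1; move: hdl; rewrite in_setE /supp_dom /=; exact: finP C _ 0 C0. Qed.

Lemma fmt0 : fin S (mt 0%N).
Proof. by rewrite -hm1; move: hdm; rewrite in_setE /supp_dom /=; exact: finP S _ _ S0. Qed.

Lemma flt k : fin C (lt k).
Proof.
case: k => [|k]; first exact: flt0.
exact: (fin_le C 0 (lt k.+1) (lt 0%N) _ _ C0 flt0 (hL k.+1 (ltn0Sn k) (lt 0%N))).
Qed.

Lemma fmt k : fin S (mt k).
Proof.
case: k => [|k]; first exact: fmt0.
exact: (fin_le S _ (mt k.+1) (mt 0%N) _ _ S0 fmt0 (hMu k.+1 (ltn0Sn k) (mt 0%N))).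
Qed.

Lemma Fobj_eq p' l' m' : fin C l' -> fin S m' ->
  Fobj Kh Mh Dh yd f alpha del a b p' l' m' = (Fr p' l' m')%:E.
Proof.
move=> h1 h2; rewrite /Fobj h1 h2 -!EFinD; congr EFin.
by rewrite /Freal /Phi; ring.
Qed.

Lemma fstar : fin C lstar /\ fin S mstar.
Proof.
have h := hmin pstar (lt 0%N) (mt 0%N).
rewrite (Fobj_eq _ _ _ (flt 0%N) (fmt 0%N)) /Fobj in h.
exact: fin3 C S 0 (const_mx a) lstar mstar _ _ C0 S0 h.
Qed.

Definition Fs := Fr pstar lstar mstar.

Lemma Fmin p' l' m' : fin C l' -> fin S m' -> Fs <= Fr p' l' m'.
Proof.
move=> h1 h2; have h := hmin p' l' m'.
have [f1 f2] := fstar.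
by rewrite (Fobj_eq _ _ _ h1 h2) (Fobj_eq _ _ _ f1 f2) lee_fin in h.
Qed.


Local Notation AAm := (AA R N Kh Mh alpha).
Local Notation bv := (bvec R N Kh Mh yd f alpha).
Local Notation PhiF := (Phi R N Kh Mh yd f alpha).

Lemma qfAA x : qf AAm x = qf Mi (Kh^T *m x) + alpha^-1 * qf Mh x.
Proof.
rewrite /AA qf_addm qf_scalem; congr (_ + _).
by rewrite !qfE -!mulmxA dot_mull.
Qed.

Lemma AA_lb x : alpha^-1 * qf Mh x <= qf AAm x.
Proof. by rewrite qfAA lerDr; exact: pMi. Qed.

Lemma sAA : symmx AAm.
Proof.
rewrite /symmx /AA linearD /= linearZ /= sM !trmx_mul trmxK.
by rewrite (inv_sym Mh sM) mulmxA.
Qed.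

Lemma uAA : AAm \in unitmx.
Proof.
apply: (posdef_unit AAm sAA) => x nz.
apply: lt_le_trans (AA_lb x); apply: mulr_gt0; first by rewrite invr_gt0.
exact: pdM.
Qed.

Lemma stat_pt k : (1 <= k)%N -> AAm *m pt k + bv (l k) (m k) = dp k.
Proof.
move=> k1; apply: (stat_vec R N Kh Mh yd f alpha sM uM) => d.
exact: (pstat R N Kh Mh yd f alpha sM al0 pMi _ _ _ _ (hP k k1)).
Qed.

Lemma stat_star : AAm *m pstar + bv lstar mstar = 0.
Proof.
have [f1 f2] := fstar.
apply: (stat_vec R N Kh Mh yd f alpha sM uM) => d.
apply: (pstat R N Kh Mh yd f alpha sM al0 pMi pstar lstar mstar 0) => q.
rewrite !dot0l !subr0.
have := Fmin q lstar mstar f1 f2.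
rewrite /Fs /Freal /Phi; lra.
Qed.

Definition xh j := invmx AAm *m (- bv (lt j) (mt j)).

Lemma stat_xh j : AAm *m xh j + bv (lt j) (mt j) = 0.
Proof. by rewrite /xh invK_l ?uAA // addNr. Qed.

Lemma xh_min j q : PhiF (xh j) (lt j) (mt j) <= PhiF q (lt j) (mt j).
Proof.
have h := Phi_dir3 R N Kh Mh yd f alpha sM al0 (xh j) (lt j) (mt j) (q - xh j) 0 0 1.
rewrite !scaler0 !addr0 scale1r subr0 in h.
have e : xh j + (q - xh j) = q by rewrite addrC subrK.
rewrite e in h; rewrite h.
have G0 := Gform_vec R N Kh Mh yd f alpha sM uM (xh j) (lt j) (mt j) (q - xh j).
rewrite stat_xh dot0l /Gform in G0.
rewrite G0 mul1r expr1n mul1r addr0 lerDl.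
apply: addr_ge0; apply: mulr_ge0; rewrite ?pMi //.
by rewrite divr_ge0 // mulr_ge0 // ltW.
Qed.


Hypothesis hstep : forall k, (1 <= k)%N ->
     p k.+1 = pt k + betak k *: (pt k - pt k.-1) /\
     l k.+1 = lt k + betak k *: (lt k - lt k.-1) /\
     m k.+1 = mt k + betak k *: (mt k - mt k.-1).

Definition ul k := (tk k : R) *: lt k - (tk k - 1) *: lt k.-1 - lstar.
Definition um k := (tk k : R) *: mt k - (tk k - 1) *: mt k.-1 - mstar.
Definition UU k := nH R N Wh alpha sigma cn (ul k) (um k).
Definition dk k := (tk k : R) *: pt k - (tk k - 1) *: xh k.-1 - pstar.
Definition DD k := dot (dp k) (dk k) + dot (dl k) (ul k) + dot (dm k) (um k).

Lemma tk_ge1 k : 1 <= (tk k : R).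
Proof. exact: tacc_ge1. Qed.

Lemma tk_neq0 k : (tk k : R) != 0.
Proof. by rewrite gt_eqF // (lt_le_trans ltr01 (tk_ge1 k)). Qed.

Lemma tk0 : (tk 0 : R) = 1. Proof. by []. Qed.
Lemma tk1 : (tk 1 : R) = 1. Proof. by []. Qed.

Lemma ul_id j : (tk j.+1 : R) *: l j.+1 - (tk j.+1 - 1) *: lt j - lstar = ul j.
Proof.
case: j => [|i].
  rewrite /ul tk1 tk0 hl1 /=.
  by apply/matrixP => i j; rewrite !mxE; ring.
have [_ [hl _]] := hstep i.+1 isT.
rewrite hl /ul /betak /=.
have t0 := tk_neq0 i.+2.
by apply/matrixP => i' j'; rewrite !mxE; field.
Qed.

Lemma um_id j : (tk j.+1 : R) *: m j.+1 - (tk j.+1 - 1) *: mt j - mstar = um j.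
Proof.
case: j => [|i].
  rewrite /um tk1 tk0 hm1 /=.
  by apply/matrixP => i j; rewrite !mxE; ring.
have [_ [_ hm]] := hstep i.+1 isT.
rewrite hm /um /betak /=.
have t0 := tk_neq0 i.+2.
by apply/matrixP => i' j'; rewrite !mxE; field.
Qed.

Lemma step_scalar (Fk Fx Fs' Fh n1 n2 U1 U0 err dd t : R) : 1 <= t ->
  Fk + 1/2 * n1 <= Fx + 1/2 * n2 + err -> U1 = t ^+ 2 * n1 -> U0 = t ^+ 2 * n2 ->
  t * err = dd -> Fx <= t^-1 * Fs' + (1 - t^-1) * Fh ->
  t ^+ 2 * (Fk - Fs') + U1 / 2 <= (t ^+ 2 - t) * (Fh - Fs') + U0 / 2 + t * dd.
Proof.
move=> t1 hK e1 e0 ee hF.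
have t0 : t != 0 by rewrite gt_eqF //; lra.
have t2 : 0 <= t ^+ 2 by exact: sqr_ge0.
have h1 := ler_wpM2l t2 hK.
have h2 := ler_wpM2l t2 hF.
have e3 : t ^+ 2 * (t^-1 * Fs' + (1 - t^-1) * Fh) = t * Fs' + (t ^+ 2 - t) * Fh by field.
have e4 : t ^+ 2 * err = t * dd by rewrite -ee; ring.
rewrite e3 in h2.
rewrite e1 e0.
have e5 : t ^+ 2 * (Fx + 1 / 2 * n2 + err) = t ^+ 2 * Fx + t ^+ 2 * n2 / 2 + t * dd by rewrite -e4; ring.
have e6 : t ^+ 2 * (Fk + 1 / 2 * n1) = t ^+ 2 * Fk + t ^+ 2 * n1 / 2 by ring.
rewrite e5 e6 in h1.
lra.
Qed.


Lemma sg0 : 0 <= sigma. Proof. exact: ltW sg_pos. Qed.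

Lemma iter j :
  (tk j.+1 : R) ^+ 2 * (Fr (pt j.+1) (lt j.+1) (mt j.+1) - Fs) + UU j.+1 / 2 <=
  ((tk j.+1 : R) ^+ 2 - tk j.+1) * (Fr (xh j) (lt j) (mt j) - Fs) + UU j / 2
   + tk j.+1 * DD j.+1.
Proof.
set k := j.+1.
set t : R := tk k.
have t1 : 1 <= t := tk_ge1 k.
have t0 : t != 0 := tk_neq0 k.
set s := t^-1.
have s0 : 0 <= s by rewrite invr_ge0; lra.
have s1 : s <= 1 by rewrite invf_le1 //; lra.
have [fls fms] := fstar.
have [fyl pyl] := fin_conv C lstar (lt j) s 0 C0 fls (flt j) s0 s1.
have [fym pym] := fin_conv S mstar (mt j) s (const_mx a) S0 fms (fmt j) s0 s1.
set yl := s *: lstar + (1 - s) *: lt j in fyl pyl.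
set ym := s *: mstar + (1 - s) *: mt j in fym pym.
set x := s *: pstar + (1 - s) *: xh j.
have k1 : (1 <= k)%N by [].
have K := KI R N Kh Mh Wh yd f alpha sigma cn sM al0 sWi pMi hs hw sg0 C S 0 (const_mx a)
  (pt k) (lt k) (mt k) (l k) (m k) (dp k) (dl k) (dm k) x yl ym C0 S0 (flt k) (fmt k) fyl fym
  (hP k k1) (hL k k1) (hMu k k1).
have hPc := Phi_conv R N Kh Mh yd f alpha sM al0 pMi pstar lstar mstar (xh j) (lt j) (mt j) s s0 s1.
have hFx : Fr x yl ym <= s * Fs + (1 - s) * Fr (xh j) (lt j) (mt j).
  rewrite /Fs /Freal.
  have e : s * (PhiF pstar lstar mstar + psi C lstar + psi S mstar) +
    (1 - s) * (PhiF (xh j) (lt j) (mt j) + psi C (lt j) + psi S (mt j)) =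
    (s * PhiF pstar lstar mstar + (1 - s) * PhiF (xh j) (lt j) (mt j))
    + (s * psi C lstar + (1 - s) * psi C (lt j))
    + (s * psi S mstar + (1 - s) * psi S (mt j)) by ring.
  rewrite e; apply: lerD; [apply: lerD|] => //.
have V1l : yl - lt k = (- s) *: ul k.
  rewrite /ul /yl /s /= -/t; apply/matrixP => i i'; rewrite !mxE; by field.
have V1m : ym - mt k = (- s) *: um k.
  rewrite /um /ym /s /= -/t; apply/matrixP => i i'; rewrite !mxE; by field.
have V2l : yl - l k = (- s) *: ul j.
  rewrite -ul_id /yl /s -/k -/t; apply/matrixP => i i'; rewrite !mxE; by field.
have V2m : ym - m k = (- s) *: um j.
  rewrite -um_id /ym /s -/k -/t; apply/matrixP => i i'; rewrite !mxE; by field.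
have V3 : pt k - x = s *: dk k.
  rewrite /dk /x /s /= -/t; apply/matrixP => i i'; rewrite !mxE; by field.
have V4l : lt k - yl = s *: ul k.
  rewrite /ul /yl /s /= -/t; apply/matrixP => i i'; rewrite !mxE; by field.
have V4m : mt k - ym = s *: um k.
  rewrite /um /ym /s /= -/t; apply/matrixP => i i'; rewrite !mxE; by field.
rewrite V1l V1m V2l V2m V3 V4l V4m !nHZ !dotZr sqrrN in K.
have K' : Fr (pt k) (lt k) (mt k) + 1/2 * (s ^+ 2 * UU k)
   <= Fr x yl ym + 1/2 * (s ^+ 2 * UU j) + s * DD k.
  by move: K; rewrite /UU /DD; lra.
apply: (step_scalar (Fr (pt k) (lt k) (mt k)) (Fr x yl ym) Fs (Fr (xh j) (lt j) (mt j))
   (s ^+ 2 * UU k) (s ^+ 2 * UU j) (UU k) (UU j) (s * DD k) (DD k) t t1 K').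
- by rewrite /s; field.
- by rewrite /s; field.
- by rewrite /s; field.
- exact: hFx.
Qed.


Hypothesis heps0 : forall k, 0 <= eps k.
Hypothesis herr : forall k, (1 <= k)%N ->
     enorm (dp k) <= eps k /\ enorm (dl k) <= eps k /\ enorm (dm k) <= eps k.

Definition aa k := Num.sqrt (UU k).
Definition lam k := (tk k : R) * eps k.
Definition cl := 1 + sigma^-1.
Definition cm := 1 + Sw * alpha / cn.
Definition cA := alpha^-1 * (w 0 i0 / cn).
Definition mK := mxabs (Kh *m Mi).
Definition c2 := mK * cl + alpha^-1 * N%:R * cm.
Definition Cb := N%:R * (cA^-1 * N%:R + cA^-1 * c2 + cl + cm).

Lemma UU_ge0 k : 0 <= UU k.
Proof. exact: (nH_ge0 R N Mh Wh alpha sigma cn al0 pMi hw sg0). Qed.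

Lemma aa_ge0 k : 0 <= aa k. Proof. exact: sqrtr_ge0. Qed.
Lemma aa_sq k : aa k ^+ 2 = UU k. Proof. by rewrite /aa sqr_sqrtr // UU_ge0. Qed.

Lemma lam_ge0 k : 0 <= lam k.
Proof. by rewrite /lam mulr_ge0 // (le_trans ler01 (tk_ge1 k)). Qed.

Lemma cl_ge0 : 0 <= cl. Proof. by rewrite /cl; have := sg_pos; rewrite -invr_gt0; lra. Qed.
Lemma cm_ge0 : 0 <= cm.
Proof.
rewrite /cm; have : 0 <= Sw * alpha / cn by rewrite divr_ge0 ?mulr_ge0 ?Sw_pos ?ltW // cn_pos.
lra.
Qed.
Lemma cA_pos : 0 < cA.
Proof. by rewrite /cA mulr_gt0 ?invr_gt0 // divr_gt0 // cn_pos. Qed.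
Lemma mK_ge0 : 0 <= mK. Proof. exact: mxabs_ge0. Qed.
Lemma c2_ge0 : 0 <= c2.
Proof.
rewrite /c2; apply: addr_ge0; first by rewrite mulr_ge0 ?mK_ge0 ?cl_ge0.
by rewrite !mulr_ge0 ?cm_ge0 // invr_ge0 ltW.
Qed.
Lemma Cb_ge0 : 0 <= Cb.
Proof.
have cA0 : 0 <= cA^-1 by rewrite invr_ge0 ltW // cA_pos.
rewrite /Cb mulr_ge0 //; apply: addr_ge0; last exact: cm_ge0.
apply: addr_ge0; last exact: cl_ge0.
by apply: addr_ge0; apply: mulr_ge0 => //; exact: c2_ge0.
Qed.

Lemma ul_bound k : enorm (ul k) <= cl * aa k.
Proof.
apply: sq_le; rewrite ?enorm_ge0 ?aa_ge0 ?invr_ge0 ?sg0 //.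
rewrite enorm_sq aa_sq.
have h := nH_lbl R N Mh Wh alpha sigma cn al0 pMi hw (ul k) (um k).
rewrite -/(UU k) in h.
by rewrite ler_pdivlMl ?sg_pos.
Qed.

Lemma um_bound k : enorm (um k) <= cm * aa k.
Proof.
apply: sq_le; rewrite ?enorm_ge0 ?aa_ge0 //.
  by rewrite divr_ge0 ?mulr_ge0 ?Sw_pos ?ltW // cn_pos.
rewrite enorm_sq aa_sq.
have h := nH_lbm R N Wh alpha sigma cn sg0 (ul k) (um k).
rewrite -/(UU k) in h.
have h2 := hWi_lb (um k).
have c0 := cn_pos.
have a0 : alpha != 0 by rewrite gt_eqF.
have cn0 : cn != 0 by rewrite gt_eqF.
have h3 : qf Wi (um k) <= alpha / cn * UU k.
  have := ler_wpM2l (_ : 0 <= alpha / cn) h.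
  rewrite mulrA (_ : alpha / cn * (cn / alpha) = 1) ?mul1r; last by field; rewrite a0 cn0.
  by apply; rewrite divr_ge0 // ltW.
apply: le_trans h2 _.
rewrite (_ : Sw * alpha / cn * UU k = Sw * (alpha / cn * UU k)); last by ring.
by apply: ler_wpM2l; [exact: Sw_pos | exact: h3].
Qed.


Lemma dotb (x y : 'cV[R]_N) (e t : R) : 0 <= t -> enorm x <= e ->
  t * dot x y <= N%:R * (t * e) * enorm y.
Proof.
move=> t0 he.
have h1 : dot x y <= N%:R * enorm x * enorm y := le_trans (ler_norm _) (dot_bound1 x y).
have h2 : N%:R * enorm x * enorm y <= N%:R * e * enorm y.
  by apply: ler_wpM2r; [exact: enorm_ge0 | apply: ler_wpM2l].
have := ler_wpM2l t0 (le_trans h1 h2).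
by rewrite (_ : t * (N%:R * e * enorm y) = N%:R * (t * e) * enorm y) //; ring.
Qed.

Lemma AAdk j : AAm *m dk j.+1 = (tk j.+1 : R) *: dp j.+1 - Kh *m Mi *m ul j + alpha^-1 *: um j.
Proof.
have := comb R N Kh Mh yd f alpha (tk j.+1) (pt j.+1) (xh j) pstar (l j.+1) (m j.+1)
  (lt j) (mt j) lstar mstar (dp j.+1) (stat_pt j.+1 isT) (stat_xh j) stat_star.
by rewrite ul_id um_id /dk /=.
Qed.

Lemma dk_bound j : enorm (dk j.+1) <= cA^-1 * (N%:R * lam j.+1 + c2 * aa j).
Proof.
set d := dk j.+1.
set t : R := tk j.+1.
have t0 : 0 <= t by rewrite /t (le_trans ler01 (tk_ge1 _)).
have c0 := cn_pos.
have h1 : cA * enorm d ^+ 2 <= qf AAm d.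
  apply: le_trans (AA_lb d); rewrite enorm_sq /cA -mulrA; apply: ler_wpM2l.
    by rewrite invr_ge0 ltW.
  rewrite mulrAC ler_pdivrMr // [_ * cn]mulrC; exact: hM_lb.
have h2 : qf AAm d = t * dot (dp j.+1) d - dot d (Kh *m Mi *m ul j) + alpha^-1 * dot (um j) d.
  by rewrite qfE AAdk dotDr dotBr !dotZr !(dotC d).
have [hdp _] := herr j.+1 isT.
have B1 := dotb (dp j.+1) d (eps j.+1) t t0 hdp.
have B2 : - dot d (Kh *m Mi *m ul j) <= enorm d * (mK * cl * aa j).
  have n1 : - dot d (Kh *m Mi *m ul j) <= `|dot d (Kh *m Mi *m ul j)| by rewrite -normrN ler_norm.
  have a1 := le_trans n1 (dot_bound d (Kh *m Mi) (ul j)); rewrite -/mK in a1.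
  have hu := ul_bound j.
  have a2 : mK * enorm d * enorm (ul j) <= mK * enorm d * (cl * aa j).
    by apply: ler_wpM2l; [rewrite mulr_ge0 ?mK_ge0 ?enorm_ge0 |].
  rewrite (_ : enorm d * (mK * cl * aa j) = mK * enorm d * (cl * aa j)); last by ring.
  exact: le_trans a1 a2.
have B3 : alpha^-1 * dot (um j) d <= enorm d * (alpha^-1 * N%:R * cm * aa j).
  have ia : 0 <= alpha^-1 by rewrite invr_ge0 ltW.
  have hb : dot (um j) d <= N%:R * enorm (um j) * enorm d := le_trans (ler_norm _) (dot_bound1 _ _).
  have hu := um_bound j.
  have hb2 : N%:R * enorm (um j) * enorm d <= N%:R * (cm * aa j) * enorm d.
    by apply: ler_wpM2r; [exact: enorm_ge0| apply: ler_wpM2l].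
  have := ler_wpM2l ia (le_trans hb hb2).
  by rewrite (_ : alpha^-1 * (N%:R * (cm * aa j) * enorm d) = enorm d * (alpha^-1 * N%:R * cm * aa j)) //; ring.
apply: lin_le; rewrite ?enorm_ge0 ?cA_pos //.
  by apply: addr_ge0; apply: mulr_ge0; rewrite ?lam_ge0 ?c2_ge0 ?aa_ge0.
have e : enorm d * (N%:R * lam j.+1 + c2 * aa j) =
  N%:R * (t * eps j.+1) * enorm d + enorm d * (mK * cl * aa j) + enorm d * (alpha^-1 * N%:R * cm * aa j).
  by rewrite /lam /c2 -/t; ring.
rewrite e; lra.
Qed.


Lemma DD_bound j : (tk j.+1 : R) * DD j.+1 <= Cb * lam j.+1 * (lam j.+1 + aa j + aa j.+1).
Proof.
set k := j.+1.
set t : R := tk k.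
have t0 : 0 <= t by rewrite /t (le_trans ler01 (tk_ge1 _)).
have [hdp0 [hdl0 hdm0]] := herr k isT.
have T1 := dotb (dp k) (dk k) (eps k) t t0 hdp0.
have T2 := dotb (dl k) (ul k) (eps k) t t0 hdl0.
have T3 := dotb (dm k) (um k) (eps k) t t0 hdm0.
rewrite -/(lam k) in T1 T2 T3.
have L0 : 0 <= N%:R * lam k by rewrite mulr_ge0 ?lam_ge0.
have b1 := ler_wpM2l L0 (dk_bound j).
have b2 := ler_wpM2l L0 (ul_bound k).
have b3 := ler_wpM2l L0 (um_bound k).
have ci : 0 <= cA^-1 by rewrite invr_ge0 ltW // cA_pos.
have X0 : 0 <= N%:R * lam k * (cA^-1 * N%:R * (aa j + aa k) + cA^-1 * c2 * (lam k + aa k)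
    + (cl + cm) * (lam k + aa j)).
  have ha := aa_ge0 j; have hb := aa_ge0 k; have hl := lam_ge0 k.
  have hc2 := c2_ge0; have hcl := cl_ge0; have hcm := cm_ge0.
  have hN : 0 <= (N%:R : R) by exact: ler0n.
  apply: mulr_ge0 => //; apply: addr_ge0; [apply: addr_ge0|].
  - by apply: mulr_ge0; [apply: mulr_ge0 | apply: addr_ge0].
  - by apply: mulr_ge0; [apply: mulr_ge0 | apply: addr_ge0].
  - by apply: mulr_ge0; apply: addr_ge0.
have e : Cb * lam k * (lam k + aa j + aa k) =
   N%:R * lam k * (cA^-1 * (N%:R * lam k + c2 * aa j)) + N%:R * lam k * (cl * aa k)
   + N%:R * lam k * (cm * aa k)
   + N%:R * lam k * (cA^-1 * N%:R * (aa j + aa k) + cA^-1 * c2 * (lam k + aa k)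
    + (cl + cm) * (lam k + aa j)).
  by rewrite /Cb; ring.
rewrite e /DD.
have e2 : t * (dot (dp k) (dk k) + dot (dl k) (ul k) + dot (dm k) (um k)) =
  t * dot (dp k) (dk k) + t * dot (dl k) (ul k) + t * dot (dm k) (um k) by ring.
rewrite e2.
have e3 : forall z : R, N%:R * lam k * z = N%:R * lam k * z by [].
lra.
Qed.


Hypothesis hser : cvg (series (fun k => k%:R * eps k) @ \oo).

Definition Eseq k := (if k is j.+1 then (tk k : R) ^+ 2 * (Fr (pt k) (lt k) (mt k) - Fs) else 0)
  + UU k / 2.

Lemma E_rec j : Eseq j.+1 <= Eseq j + Cb * lam j.+1 * (lam j.+1 + aa j + aa j.+1).
Proof.
have hi := iter j.
have hd := DD_bound j.
have hc : ((tk j.+1 : R) ^+ 2 - tk j.+1) * (Fr (xh j) (lt j) (mt j) - Fs) <=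
   (if j is i.+1 then (tk j : R) ^+ 2 * (Fr (pt j) (lt j) (mt j) - Fs) else 0).
  case: j {hi hd} => [|i]; first by rewrite tk1 expr1n subrr mul0r.
  have -> : ((tk i.+2 : R) ^+ 2 - tk i.+2) = (tk i.+1) ^+ 2 by rewrite /tk /= tacc_rel.
  apply: ler_wpM2l; first exact: sqr_ge0.
  rewrite lerD2r /Freal lerD2r lerD2r; exact: xh_min.
rewrite /Eseq -/(Eseq j); move: hc hi hd; rewrite /Eseq.
case: j => [|i] /=; lra.
Qed.

Lemma E_lb k : aa k ^+ 2 / 2 <= Eseq k.
Proof.
rewrite /Eseq aa_sq lerDr; case: k => [|k] //.
apply: mulr_ge0; first exact: sqr_ge0.
by rewrite subr_ge0; apply: Fmin; [exact: flt | exact: fmt].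
Qed.

Definition Lam := limn (series (fun k => k%:R * eps k)).

Lemma psum k : \sum_(1 <= j < k.+1) lam j <= Lam.
Proof.
apply: (@le_trans _ _ (\sum_(1 <= j < k.+1) j%:R * eps j)).
  apply: ler_sum_nat => i /andP [i1 _]; rewrite /lam; apply: ler_wpM2r => //.
  case: i i1 => [//|i] _; exact: tacc_ub.
have e : \sum_(1 <= j < k.+1) j%:R * eps j = series (fun k => k%:R * eps k) k.+1.
  by rewrite /series /= (big_ltn (ltn0Sn k)) mul0r add0r.
rewrite e; apply: nondecreasing_cvgn_le; last exact: hser.
move=> n1 n2 n12; rewrite /series /= (big_cat_nat (leq0n n1) n12) /= lerDl.
by apply: sumr_ge0 => i _; rewrite mulr_ge0.
Qed.

Lemma main_bound : exists c0 : R, forall k, (1 <= k)%N ->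
    (Fobj Kh Mh Dh yd f alpha del a b (pt k) (lt k) (mt k)
     - Fobj Kh Mh Dh yd f alpha del a b pstar lstar mstar
     <= ((2 * (qf 0 (pt 0%N - pstar)
               + qf ((sigma%:M - invmx Mh) + invmx Mh) (lt 0%N - lstar)
               + qf (alpha^-1 *: (cn *: invmx Wh - invmx Mh) + alpha^-1 *: invmx Mh)
                    (mt 0%N - mstar))
          + c0) / (k.+1)%:R ^+ 2)%:E)%E.
Proof.
have [Eb hEb] := rec_bound R Eseq aa lam Cb Lam Cb_ge0 lam_ge0 aa_ge0 psum E_rec E_lb.
exists (4 * Eb - 2 * (qf 0 (pt 0%N - pstar)
               + qf ((sigma%:M - invmx Mh) + invmx Mh) (lt 0%N - lstar)
               + qf (alpha^-1 *: (cn *: invmx Wh - invmx Mh) + alpha^-1 *: invmx Mh)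
                    (mt 0%N - mstar))).
move=> k k1.
rewrite [2 * _ + _]addrC subrK.
have [f1 f2] := fstar.
rewrite (Fobj_eq _ _ _ (flt k) (fmt k)) (Fobj_eq _ _ _ f1 f2) -EFinB lee_fin.
case: k k1 => [//|j] _.
have h := hEb j.+1; rewrite /Eseq in h.
have u0 := UU_ge0 j.+1.
have e0 : 0 <= Fr (pt j.+1) (lt j.+1) (mt j.+1) - Fs.
  by rewrite subr_ge0; apply: Fmin; [exact: flt | exact: fmt].
have tl := tacc_lb R j.
rewrite -/(tk j.+1) in tl.
set t : R := tk j.+1 in h tl.
set e := Fr _ _ _ - Fs in h e0 *.
set T : R := (j.+2)%:R in tl *.
have T0 : 0 < T by rewrite /T ltr0n.
rewrite ler_pdivlMr ?exprn_gt0 //.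
have hT : T <= 2 * t by lra.
have hT2 : T ^+ 2 <= 4 * t ^+ 2.
  have : T ^+ 2 <= (2 * t) ^+ 2 by rewrite ler_sqr ?nnegrE //; lra.
  by rewrite exprMn (_ : (2 : R) ^+ 2 = 4) //; rewrite expr2 -natrM.
have := ler_wpM2l e0 hT2.
nra.
Qed.

End Main.

Arguments main_bound : clear implicits.

Theorem theorem7 (R : realType) (N n : nat) (Kh Mh Wh Dh : 'M[R]_N)
  (yd f : 'cV[R]_N) (alpha del a b cn omega_m sigma : R) (w : 'rV[R]_N)
  (eps : nat -> R)
  (pt lt mt p l m dp dl dm : nat -> 'cV[R]_N)
  (pstar lstar mstar : 'cV[R]_N) :
  (* problem data *)
  (n = 2 \/ n = 3)%N ->
  cn = (if n == 2%N then 4 else 5) ->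
  symmx Kh -> posdef Kh ->
  symmx Mh -> posdef Mh ->
  symmx Dh -> posdef Dh ->
  Wh = diag_mx w -> (forall i, 0 < w 0 i) ->
  (forall z, qf Mh z <= qf Wh z /\ qf Wh z <= cn * qf Mh z) ->
  (exists i0, (forall i, w 0 i0 <= w 0 i) /\ omega_m = (w 0 i0)^-1) ->
  sigma = cn * omega_m ->
  0 < alpha -> 0 < del -> a <= b ->
  (* tolerances *)
  (forall k, 0 <= eps k) ->
  cvg (series (fun k => k%:R * eps k) @ \oo) ->
  (* input *)
  p 1%N = pt 0%N -> l 1%N = lt 0%N -> m 1%N = mt 0%N ->
  l 1%N \in supp_dom (ellC Dh del) -> m 1%N \in supp_dom (boxS a b) ->
  (* Step 1 *)
  (forall k, (1 <= k)%N ->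
     enorm (dp k) <= eps k /\ enorm (dl k) <= eps k /\ enorm (dm k) <= eps k) ->
  (forall k, (1 <= k)%N -> forall q : 'cV[R]_N,
     dot (Mh *m f) (pt k) + phi Kh Mh yd alpha (pt k) (l k) (m k) - dot (dp k) (pt k)
     <= dot (Mh *m f) q + phi Kh Mh yd alpha q (l k) (m k) - dot (dp k) q) ->
  (forall k, (1 <= k)%N -> forall q : 'cV[R]_N,
     (supp (ellC Dh del) (lt k)
      + (1/2 * qf (invmx Mh) (lt k - Mh *m yd + Kh^T *m pt k)
         + 1/2 * qf (sigma%:M - invmx Mh) (lt k - l k)
         - dot (dl k) (lt k))%:E
     <= supp (ellC Dh del) q
      + (1/2 * qf (invmx Mh) (q - Mh *m yd + Kh^T *m pt k)
         + 1/2 * qf (sigma%:M - invmx Mh) (q - l k)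
         - dot (dl k) q)%:E)%E) ->
  (forall k, (1 <= k)%N -> forall q : 'cV[R]_N,
     (supp (boxS a b) (mt k)
      + (1/(2 * alpha) * qf (invmx Mh) (mt k - Mh *m pt k)
         + 1/(2 * alpha) * qf (cn *: invmx Wh - invmx Mh) (mt k - m k)
         - dot (dm k) (mt k))%:E
     <= supp (boxS a b) q
      + (1/(2 * alpha) * qf (invmx Mh) (q - Mh *m pt k)
         + 1/(2 * alpha) * qf (cn *: invmx Wh - invmx Mh) (q - m k)
         - dot (dm k) q)%:E)%E) ->
  (* Step 2 *)
  (forall k, (1 <= k)%N ->
     p k.+1 = pt k + betak k *: (pt k - pt k.-1) /\
     l k.+1 = lt k + betak k *: (lt k - lt k.-1) /\
     m k.+1 = mt k + betak k *: (mt k - mt k.-1)) ->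
  (* z* minimizes F *)
  (forall q1 q2 q3 : 'cV[R]_N,
     (Fobj Kh Mh Dh yd f alpha del a b pstar lstar mstar
      <= Fobj Kh Mh Dh yd f alpha del a b q1 q2 q3)%E) ->
  exists c0 : R, forall k, (1 <= k)%N ->
    (Fobj Kh Mh Dh yd f alpha del a b (pt k) (lt k) (mt k)
     - Fobj Kh Mh Dh yd f alpha del a b pstar lstar mstar
     <= ((2 * (qf 0 (pt 0%N - pstar)
               + qf ((sigma%:M - invmx Mh) + invmx Mh) (lt 0%N - lstar)
               + qf (alpha^-1 *: (cn *: invmx Wh - invmx Mh) + alpha^-1 *: invmx Mh)
                    (mt 0%N - mstar))
          + c0) / (k.+1)%:R ^+ 2)%:E)%E.
Proof.
move=> hn hcn sK pK sM pM sD pD hWd hw0 hWM [i0 [hi0 hom]] hsig al0 del0 hab heps0 hser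
  hp1 hl1 hm1 hdl hdm herr hP hL hMu hstep hmin.
exact: (main_bound R N n Kh Mh Wh Dh yd f alpha del a b cn omega_m sigma w eps pt lt mt p l m
  dp dl dm pstar lstar mstar hcn sM pM hWd hw0 hWM i0 hi0 hom hsig al0 del0 hab hl1 hm1
  hdl hdm hP hL hMu hmin hstep heps0 herr hser).
Qed.
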